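(* Let $>$ be a $\mathcal B$-compatible reduction order. Every fair and non-failing run $(\mathcal E,\varnothing)\vdash^*_{\mathcal I_B}(\varnothing,\mathcal R)$ for an ES $\mathcal E$ in $\mathcal I_B$ produces a $\mathcal B$-complete presentation of $\mathcal E$: $\leftrightarrow^*_{\mathcal E\cup\mathcal B}=\leftrightarrow^*_{\mathcal R\cup\mathcal B}$, $\mathcal R$ is terminating modulo $\mathcal B$ and Church–Rosser modulo $\mathcal B$.
   Context: Terms over a signature $\mathcal F$ and variables. For a set $\mathcal E$ of pairs of terms (equations and rules read as oriented pairs), $s\to_{\mathcal E}t$ iff $s|_p=\ell\sigma$, $t=s[r\sigma]_p$ for some $(\ell,r)\in\mathcal E$, position $p$, substitution $\sigma$; $\leftarrow$ is the inverse, $\leftrightarrow$ the symmetric closure. $\mathcal B$ is a fixed ES with $\mathrm{Var}(\ell)=\mathrm{Var}(r)$ for all $\ell\approx r\in\mathcal B$; $\sim_{\mathcal B}=\leftrightarrow^*_{\mathcal B}$, $\mathcal B^\pm=\mathcal B\cup\{t\approx s\mid s\approx t\in\mathcal B\}$; $\to_{\mathcal R/\mathcal B}=\sim_{\mathcal B}\cdot\to_{\mathcal R}\cdot\sim_{\mathcal B}$; $s\downarrow^\sim_{\mathcal R}t$ iff $s\to^*_{\mathcal R}\cdot\sim_{\mathcal B}\cdot\leftarrow^*_{\mathcal R}t$. Terminating modulo $\mathcal B$: no infinite $\to_{\mathcal R/\mathcal B}$-sequence; Church–Rosser modulo $\mathcal B$: $\leftrightarrow^*_{\mathcal R\cup\mathcal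 B}\subseteq\downarrow^\sim_{\mathcal R}$. A $\mathcal B$-compatible reduction order is a well-founded order on terms closed under contexts and substitutions with $\sim_{\mathcal B}\cdot>\cdot\sim_{\mathcal B}\subseteq>$. The inference system $\mathcal I_B$ (parameterized by $>$) on pairs $(\mathcal E,\mathcal R)$ ($\uplus$ disjoint union, $s\approx^\pm t$ means $s\approx t$ or $t\approx s$): Deduce: $(\mathcal E,\mathcal R)\vdash(\mathcal E\cup\{s\approx t\},\mathcal R)$ if $s\leftarrow_{\mathcal R}\cdot\to_{\mathcal R\cup\mathcal B^\pm}t$. Orient: $(\mathcal E\uplus\{s\approx^\pm t\},\mathcal R)\vdash(\mathcal E,\mathcal R\cup\{s\to t\})$ if $s>t$. Delete: $(\mathcal E\uplus\{s\approx t\},\mathcal R)\vdash(\mathcal E,\mathcal R)$ if $s\sim_{\mathcal B}t$. Simplify: $(\mathcal E\uplus\{s\approx^\pm t\},\mathcal R)\vdash(\mathcal E\cup\{u\approx t\},\mathcal R)$ if $s\to_{\mathcal R}u$. Collapse: $(\mathcal E,\mathcal R\uplus\{s\to t\})\vdash(\mathcal E\cup\{u\approx t\},\mathcal R)$ if $s\to_{\mathcal R}u$. Compose: $(\mathcal E,\mathcal R\uplus\{s\to t\})\vdash(\mathcal E,\mathcal R\cup\{s\to u\})$ if $t\to_{\mathcal R}u$. A run for $\mathcal E$ goes from $(\mathcal E_0,\mathcal R_0)=(\mathcal E,\varnothing)$ to $(\mathcal E_n,\mathcal R_n)$; it fails if $\mathcal E_n\ne\varnothing$, and is fair if $\mathcal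 R_n$ is left-linear and $\mathrm{PCP}(\mathcal R_n)\cup\mathrm{PCP}^\pm(\mathcal R_n,\mathcal B^\pm)\subseteq\ \downarrow^\sim_{\mathcal R_n}\cup\bigcup_{i=0}^n\leftrightarrow_{\mathcal E_i}$. Critical pairs: for sets of oriented pairs $\mathcal R_1,\mathcal R_2$ (equations of $\mathcal B^\pm$ read as oriented pairs), an overlap is $\langle\ell_1\to r_1,p,\ell_2\to r_2\rangle$ with $\ell_i\to r_i$ variants of elements of $\mathcal R_i$ without common variables, $p$ a non-variable position of $\ell_2$, $\ell_1$ and $\ell_2|_p$ unifiable, and the two rules not variants if $p=\epsilon$; with an mgu $\sigma$ it yields the critical pair $\ell_2\sigma[r_1\sigma]_p\approx r_2\sigma$, which is prime if all proper subterms of $\ell_2\sigma|_p$ are normal forms w.r.t. the TRS $\mathcal R$ under consideration. $\mathrm{PCP}(\mathcal R)$: prime critical pairs from overlaps of $\mathcal R$ with itself; $\mathrm{PCP}^\pm(\mathcal R,\mathcal B^\pm)$: prime critical pairs from overlaps between $\mathcal R$ and $\mathcal B^\pm$ in either order. *)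

(* Defs.v *)
From Stdlib Require Import List Relations.
Import ListNotations.
Set Implicit Arguments.

Section Terms.
Variable F : Type.

(* First-order terms; variables are natural numbers (an infinite supply). *)
Inductive term : Type :=
| Var : nat -> term
| Fun : F -> list term -> term.

(* Sets of pairs of terms (ESs and TRSs, read as oriented pairs). *)
Definition rules := term -> term -> Prop.

Definition empty_rules : rules := fun _ _ => False.
Definition runion (E1 E2 : rules) : rules := fun s t => E1 s t \/ E2 s t.
Definition single (l r : term) : rules := fun s t => s = l /\ t = r.
Definition same (E1 E2 : rules) : Prop := forall s t, E1 s t <-> E2 s t.
Definition sym_rules (E : rules) : rules := fun s t => E s t \/ E t s.

Definition disj_add (E E0 : rules) (l r : term) : Prop :=
  ~ E0 l r /\ same E (runion E0 (single l r)).

Fixpoint subst (sigma : nat -> term) (t : term) : term :=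
  match t with
  | Var x => sigma x
  | Fun f ts => Fun f (map (subst sigma) ts)
  end.

Fixpoint vars (t : term) : list nat :=
  match t with
  | Var x => [x]
  | Fun f ts => flat_map vars ts
  end.

Definition pos := list nat.

Fixpoint subterm_at (t : term) (p : pos) : option term :=
  match p with
  | [] => Some t
  | i :: q =>
      match t with
      | Var _ => None
      | Fun f ts =>
          match nth_error ts i with
          | Some u => subterm_at u q
          | None => None
          end
      end
  end.

Fixpoint set_nth (A : Type) (l : list A) (i : nat) (a : A) : list A :=
  match l, i with
  | [], _ => []
  | _ :: l', 0 => a :: l'
  | b :: l', S j => b :: set_nth l' j a
  end.

(* t[u]_p (meaningful when p is a position of t) *)
Fixpoint replace_at (t : term) (p : pos) (u : term) : term :=
  match p with
  | [] => u
  | i :: q =>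
      match t with
      | Var _ => t
      | Fun f ts => Fun f (set_nth ts i (replace_at (nth i ts t) q u))
      end
  end.

Definition rstep (E : rules) (s t : term) : Prop :=
  exists p l r sigma,
    E l r /\ subterm_at s p = Some (subst sigma l) /\
    t = replace_at s p (subst sigma r).

Definition conv_step (E : rules) : relation term :=
  fun s t => rstep E s t \/ rstep E t s.
Definition conv (E : rules) : relation term :=
  clos_refl_trans term (conv_step E).
Definition rsteps (E : rules) : relation term :=
  clos_refl_trans term (rstep E).

Section ModuloB.
Variable B : rules.

Definition simB : relation term := conv B.

Definition rstep_mod (R : rules) (s t : term) : Prop :=
  exists s' t', simB s s' /\ rstep R s' t' /\ simB t' t.

Definition joinable_mod (R : rules) (s t : term) : Prop :=
  exists u v, rsteps R s u /\ simB u v /\ rsteps R t v.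

Definition terminating_mod (R : rules) : Prop :=
  ~ exists f : nat -> term, forall i, rstep_mod R (f i) (f (S i)).

Definition church_rosser_mod (R : rules) : Prop :=
  forall s t, conv (runion R B) s t -> joinable_mod R s t.

Definition B_compatible_reduction_order (gt : relation term) : Prop :=
  (forall s t u, gt s t -> gt t u -> gt s u) /\
  (forall s, ~ gt s s) /\
  well_founded (fun x y => gt y x) /\
  (forall s t u p v, gt s t -> subterm_at u p = Some v ->
                     gt (replace_at u p s) (replace_at u p t)) /\
  (forall s t sigma, gt s t -> gt (subst sigma s) (subst sigma t)) /\
  (forall s s' t' t, simB s s' -> gt s' t' -> simB t' t -> gt s t).

Definition vars_preserving (E : rules) : Prop :=
  forall l r, E l r -> forall x, In x (vars l) <-> In x (vars r).

Definition renaming (rho : nat -> nat) : Prop :=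
  exists rho', (forall x, rho' (rho x) = x) /\ (forall x, rho (rho' x) = x).

Definition is_variant (l' r' l r : term) : Prop :=
  exists rho, renaming rho /\
    l' = subst (fun x => Var (rho x)) l /\ r' = subst (fun x => Var (rho x)) r.

Definition variant_of (R : rules) (l' r' : term) : Prop :=
  exists l r, R l r /\ is_variant l' r' l r.

Definition mgu (sigma : nat -> term) (u v : term) : Prop :=
  subst sigma u = subst sigma v /\
  forall tau, subst tau u = subst tau v ->
    exists rho, forall x, tau x = subst rho (sigma x).

Definition normal_form (R : rules) (t : term) : Prop := ~ exists u, rstep R t u.

(* prime critical pairs from overlaps <l1 -> r1, p, l2 -> r2> with
   l1 -> r1 from R1 and l2 -> r2 from R2; primality w.r.t. the TRS R *)
Definition pcp (R R1 R2 : rules) (s t : term) : Prop :=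
  exists l1 r1 l2 r2 p sigma f ts,
    variant_of R1 l1 r1 /\ variant_of R2 l2 r2 /\
    (forall x, In x (vars l1 ++ vars r1) -> ~ In x (vars l2 ++ vars r2)) /\
    subterm_at l2 p = Some (Fun f ts) /\
    (p = [] -> ~ is_variant l1 r1 l2 r2) /\
    mgu sigma l1 (Fun f ts) /\
    s = replace_at (subst sigma l2) p (subst sigma r1) /\
    t = subst sigma r2 /\
    (forall q u, q <> [] -> subterm_at (subst sigma (Fun f ts)) q = Some u ->
                 normal_form R u).

Definition left_linear (R : rules) : Prop :=
  forall l r, R l r -> NoDup (vars l).

Definition state := (rules * rules)%type.

Definition inf_step (gt : relation term) (st st' : state) : Prop :=
  let (E, R) := st in let (E', R') := st' in
  (exists s t u, rstep R u s /\ rstep (runion R (sym_rules B)) u t /\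
     same E' (runion E (single s t)) /\ same R' R) \/
  (exists s t, (disj_add E E' s t \/ disj_add E E' t s) /\ gt s t /\
     same R' (runion R (single s t))) \/
  (exists s t, disj_add E E' s t /\ simB s t /\ same R' R) \/
  (exists E0 s t u, (disj_add E E0 s t \/ disj_add E E0 t s) /\ rstep R s u /\
     same E' (runion E0 (single u t)) /\ same R' R) \/
  (exists s t u, disj_add R R' s t /\ rstep R' s u /\
     same E' (runion E (single u t))) \/
  (exists R0 s t u, disj_add R R0 s t /\ rstep R0 t u /\
     same R' (runion R0 (single s u)) /\ same E' E).

Definition is_run (gt : relation term) (E : rules) (n : nat) (st : nat -> state) : Prop :=
  same (fst (st 0)) E /\ same (snd (st 0)) empty_rules /\
  forall i, i < n -> inf_step gt (st i) (st (S i)).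

Definition fair_run (n : nat) (st : nat -> state) : Prop :=
  let Rn := snd (st n) in
  left_linear Rn /\
  forall s t,
    (pcp Rn Rn Rn s t \/ pcp Rn Rn (sym_rules B) s t \/ pcp Rn (sym_rules B) Rn s t) ->
    joinable_mod Rn s t \/ exists i, i <= n /\ conv_step (fst (st i)) s t.

Definition non_failing_run (n : nat) (st : nat -> state) : Prop :=
  same (fst (st n)) empty_rules.

End ModuloB.
End Terms.

(* Main.v *)
Require Import Defs.
From Stdlib Require Import List Relations Lia Arith Classical.
Import ListNotations.

Arguments Var {F} _.
Arguments Fun {F} _ _.
Arguments vars {F} _.

Section TermLemmas.
Variable F : Type.
Local Notation term := (term F).
Implicit Types (t u v w : term).

Fixpoint term_ind2 (P : term -> Prop) (HV : forall x, P (Var x))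
  (HF : forall f ts, Forall P ts -> P (Fun f ts)) (t : term) : P t :=
  match t with
  | Var x => HV x
  | Fun f ts => HF f ts ((fix go (l : list term) : Forall P l :=
        match l with [] => Forall_nil _ | u :: l' => Forall_cons _ (term_ind2 P HV HF u) (go l') end) ts)
  end.

Lemma subst_subst (s t : nat -> term) u :
  subst t (subst s u) = subst (fun x => subst t (s x)) u.
Proof.
  induction u as [x|f ts IH] using term_ind2; simpl; auto.
  f_equal. rewrite map_map. apply map_ext_in. intros a Ha.
  rewrite Forall_forall in IH. auto.
Qed.

Lemma subst_ext (s t : nat -> term) u :
  (forall x, In x (vars u) -> s x = t x) -> subst s u = subst t u.
Proof.
  induction u as [x|f ts IH] using term_ind2; simpl; intros H; auto.
  f_equal. apply map_ext_in. intros a Ha.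
  rewrite Forall_forall in IH. apply IH; auto. intros x Hx. apply H.
  apply in_flat_map. eauto.
Qed.

Lemma map_eq_in {A C : Type} (f g : A -> C) l a : map f l = map g l -> In a l -> f a = g a.
Proof.
  induction l; simpl; intros H Hi; [contradiction|].
  injection H; intros. destruct Hi; subst; auto.
Qed.

Lemma subst_ext_inv (s t : nat -> term) u :
  subst s u = subst t u -> forall x, In x (vars u) -> s x = t x.
Proof.
  induction u as [y|f ts IH] using term_ind2; simpl; intros H x Hx.
  - destruct Hx as [->|[]]; auto.
  - injection H; intros Hm. apply in_flat_map in Hx. destruct Hx as [a [Ha Hxa]].
    rewrite Forall_forall in IH. eapply IH; eauto. eapply map_eq_in; eauto.
Qed.

Lemma subst_id (u : term) : subst Var u = u.
Proof.
  induction u as [x|f ts IH] using term_ind2; simpl; auto.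
  f_equal. rewrite <- (map_id ts) at 2. apply map_ext_in.
  intros a Ha. rewrite Forall_forall in IH. auto.
Qed.

Lemma nth_error_set_nth_eq {A} (l : list A) i a b :
  nth_error l i = Some a -> nth_error (set_nth l i b) i = Some b.
Proof.
  revert i; induction l; intros [|i]; simpl; intros H; try discriminate; auto.
Qed.

Lemma nth_error_set_nth_neq {A} (l : list A) i j b :
  i <> j -> nth_error (set_nth l i b) j = nth_error l j.
Proof.
  revert i j; induction l; intros [|i] [|j]; simpl; intros H; auto; try lia.
Qed.

Lemma set_nth_nth {A} (l : list A) i a : nth_error l i = Some a -> set_nth l i a = l.
Proof.
  revert i; induction l; intros [|i]; simpl; intros H; try discriminate.
  - injection H; intros; subst; auto.
  - f_equal; auto.
Qed.

Lemma set_nth_twice {A} (l : list A) i a b : set_nth (set_nth l i a) i b = set_nth l i b.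
Proof.
  revert i; induction l; intros [|i]; simpl; auto. f_equal; auto.
Qed.

Lemma set_nth_comm {A} (l : list A) i j a b :
  i <> j -> set_nth (set_nth l i a) j b = set_nth (set_nth l j b) i a.
Proof.
  revert i j; induction l; intros [|i] [|j]; simpl; intros H; auto; try lia.
  f_equal; auto.
Qed.

Lemma map_set_nth {A C} (f : A -> C) l i a : map f (set_nth l i a) = set_nth (map f l) i (f a).
Proof.
  revert i; induction l; intros [|i]; simpl; auto. f_equal; auto.
Qed.

Lemma nth_nth_error {A} (l : list A) i a d : nth_error l i = Some a -> nth i l d = a.
Proof.
  revert i; induction l; intros [|i]; simpl; intros H; try discriminate; auto.
  injection H; auto.
Qed.

Lemma set_nth_app {A} (pre post : list A) a b :
  set_nth (pre ++ a :: post) (length pre) b = pre ++ b :: post.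
Proof. induction pre; simpl; auto. f_equal; auto. Qed.

Lemma nth_error_app_len {A} (pre post : list A) a :
  nth_error (pre ++ a :: post) (length pre) = Some a.
Proof. induction pre; simpl; auto. Qed.

Lemma st_app t p q :
  subterm_at t (p ++ q) = match subterm_at t p with Some u => subterm_at u q | None => None end.
Proof.
  revert t; induction p as [|i p IH]; intros t; simpl; auto.
  destruct t as [x|f ts]; auto. destruct (nth_error ts i); auto.
Qed.

Lemma st_app_some t p q u : subterm_at t p = Some u -> subterm_at t (p ++ q) = subterm_at u q.
Proof. intros H. rewrite st_app, H. auto. Qed.

Lemma rep_app t p q u v :
  subterm_at t p = Some u -> replace_at t (p ++ q) v = replace_at t p (replace_at u q v).
Proof.
  revert t; induction p as [|i p IH]; intros t; simpl; intros H.
  - injection H; intros; subst; auto.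
  - destruct t as [x|f ts]; [discriminate|].
    destruct (nth_error ts i) eqn:E; [|discriminate].
    rewrite (nth_nth_error _ _ _ _ E). f_equal. f_equal. auto.
Qed.

Lemma st_rep t p u v : subterm_at t p = Some u -> subterm_at (replace_at t p v) p = Some v.
Proof.
  revert t; induction p as [|i p IH]; intros t; simpl; intros H; auto.
  destruct t as [x|f ts]; [discriminate|].
  destruct (nth_error ts i) eqn:E; [|discriminate].
  rewrite (nth_nth_error _ _ _ _ E).
  rewrite (nth_error_set_nth_eq _ _ _ _ E). eauto.
Qed.

Lemma rep_rep t p u v v' :
  subterm_at t p = Some u -> replace_at (replace_at t p v) p v' = replace_at t p v'.
Proof.
  revert t; induction p as [|i p IH]; intros t; simpl; intros H; auto.
  destruct t as [x|f ts]; [discriminate|].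
  destruct (nth_error ts i) eqn:E; [|discriminate].
  rewrite (nth_nth_error _ _ _ _ E).
  rewrite (nth_nth_error _ _ _ _ (nth_error_set_nth_eq _ _ _ _ E)).
  rewrite set_nth_twice. f_equal. f_equal. eauto.
Qed.

Lemma rep_id t p u : subterm_at t p = Some u -> replace_at t p u = t.
Proof.
  revert t; induction p as [|i p IH]; intros t; simpl; intros H.
  - injection H; auto.
  - destruct t as [x|f ts]; [discriminate|].
    destruct (nth_error ts i) eqn:E; [|discriminate].
    rewrite (nth_nth_error _ _ _ _ E). rewrite (IH _ H). f_equal. apply set_nth_nth; auto.
Qed.

Lemma st_subst (s : nat -> term) t p u :
  subterm_at t p = Some u -> subterm_at (subst s t) p = Some (subst s u).
Proof.
  revert t; induction p as [|i p IH]; intros t; simpl; intros H.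
  - injection H; intros; subst; auto.
  - destruct t as [x|f ts]; [discriminate|]. simpl.
    rewrite nth_error_map. destruct (nth_error ts i) eqn:E; [|discriminate]. simpl. auto.
Qed.

Lemma rep_subst (s : nat -> term) t p u v :
  subterm_at t p = Some u -> subst s (replace_at t p v) = replace_at (subst s t) p (subst s v).
Proof.
  revert t; induction p as [|i p IH]; intros t; simpl; intros H; auto.
  destruct t as [x|f ts]; [discriminate|]. simpl.
  destruct (nth_error ts i) eqn:E; [|discriminate].
  rewrite (nth_nth_error _ _ _ _ E).
  rewrite (nth_nth_error (map (subst s) ts) i (subst s t)) by (rewrite nth_error_map, E; reflexivity).
  f_equal. rewrite map_set_nth. f_equal. auto.
Qed.

Lemma st_subst_inv (s : nat -> term) t q u :
  subterm_at (subst s t) q = Some u ->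
  (exists f ts, subterm_at t q = Some (Fun f ts)) \/
  (exists q1 q2 x, q = q1 ++ q2 /\ subterm_at t q1 = Some (Var x) /\ subterm_at (s x) q2 = Some u).
Proof.
  revert t; induction q as [|i q IH]; intros t H.
  - destruct t as [x|f ts]; simpl in *.
    + right. exists [], [], x. auto.
    + left. eauto.
  - destruct t as [x|f ts].
    + right. exists [], (i :: q), x. simpl in *. auto.
    + simpl in H. rewrite nth_error_map in H.
      destruct (nth_error ts i) eqn:E; [|discriminate]. simpl in H.
      destruct (IH _ H) as [[g [us Hg]]|[q1 [q2 [x [-> [H1 H2]]]]]].
      * left. exists g, us. simpl. rewrite E. auto.
      * right. exists (i :: q1), q2, x. simpl. rewrite E. auto.
Qed.

Lemma vars_st t x : In x (vars t) <-> exists q, subterm_at t q = Some (Var x).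
Proof.
  split.
  - induction t as [y|f ts IH] using term_ind2; simpl; intros Hx.
    + destruct Hx as [->|[]]. exists []. auto.
    + apply in_flat_map in Hx. destruct Hx as [a [Ha Hxa]].
      rewrite Forall_forall in IH. destruct (IH a Ha Hxa) as [q Hq].
      destruct (In_nth_error _ _ Ha) as [i Hi].
      exists (i :: q). simpl. rewrite Hi. auto.
  - intros [q Hq]. revert t Hq. induction q as [|i q IH]; intros t Hq; simpl in Hq.
    + injection Hq; intros; subst; simpl; auto.
    + destruct t as [y|f ts]; [discriminate|].
      destruct (nth_error ts i) eqn:E; [|discriminate].
      simpl. apply in_flat_map. exists t. split; eauto. eapply nth_error_In; eauto.
Qed.

Lemma vars_sub t q u x : subterm_at t q = Some u -> In x (vars u) -> In x (vars t).
Proof.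
  intros H Hx. apply vars_st in Hx. destruct Hx as [q' Hq'].
  apply vars_st. exists (q ++ q'). rewrite (st_app_some _ _ _ _ H). auto.
Qed.

Lemma par_base t i j a b x y v :
  i <> j -> subterm_at t (i :: a) = Some x -> subterm_at t (j :: b) = Some y ->
  subterm_at (replace_at t (i :: a) v) (j :: b) = Some y.
Proof.
  intros Hij Hx Hy. destruct t as [z|f ts]; [discriminate|]. simpl in *.
  destruct (nth_error ts i) eqn:Ei; [|discriminate].
  rewrite nth_error_set_nth_neq; auto.
Qed.

Lemma par_base_comm t i j a b x y v w :
  i <> j -> subterm_at t (i :: a) = Some x -> subterm_at t (j :: b) = Some y ->
  replace_at (replace_at t (i :: a) v) (j :: b) w = replace_at (replace_at t (j :: b) w) (i :: a) v.
Proof.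
  intros Hij Hx Hy. destruct t as [z|f ts]; [discriminate|]. simpl in *.
  destruct (nth_error ts i) as [ti|] eqn:Ei; [|discriminate].
  destruct (nth_error ts j) as [tj|] eqn:Ej; [|discriminate].
  rewrite (nth_nth_error _ _ _ _ Ei), (nth_nth_error _ _ _ _ Ej).
  rewrite (nth_nth_error (set_nth ts i _) j tj) by (rewrite nth_error_set_nth_neq; auto).
  rewrite (nth_nth_error (set_nth ts j _) i ti) by (rewrite nth_error_set_nth_neq; auto).
  f_equal. apply set_nth_comm; auto.
Qed.

Lemma par_st t c i j a b x y v :
  i <> j -> subterm_at t (c ++ i :: a) = Some x -> subterm_at t (c ++ j :: b) = Some y ->
  subterm_at (replace_at t (c ++ i :: a) v) (c ++ j :: b) = Some y.
Proof.
  intros Hij Hx Hy. rewrite st_app in Hx, Hy.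
  destruct (subterm_at t c) as [tc|] eqn:Ec; [|discriminate].
  rewrite (rep_app _ _ _ _ _ Ec). rewrite (st_app_some _ _ _ _ (st_rep _ _ _ _ Ec)).
  eapply par_base; eauto.
Qed.

Lemma par_comm t c i j a b x y v w :
  i <> j -> subterm_at t (c ++ i :: a) = Some x -> subterm_at t (c ++ j :: b) = Some y ->
  replace_at (replace_at t (c ++ i :: a) v) (c ++ j :: b) w =
  replace_at (replace_at t (c ++ j :: b) w) (c ++ i :: a) v.
Proof.
  intros Hij Hx Hy. rewrite st_app in Hx, Hy.
  destruct (subterm_at t c) as [tc|] eqn:Ec; [|discriminate].
  rewrite !(rep_app _ _ _ _ _ Ec).
  rewrite !(rep_app _ _ _ _ _ (st_rep _ _ _ _ Ec)).
  rewrite !(rep_rep _ _ _ _ _ Ec).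
  f_equal. eapply par_base_comm; eauto.
Qed.

Lemma pos_cases (p1 p2 : pos) :
  (exists q, p2 = p1 ++ q) \/ (exists q, p1 = p2 ++ q) \/
  (exists c i j a b, i <> j /\ p1 = c ++ i :: a /\ p2 = c ++ j :: b).
Proof.
  revert p2; induction p1 as [|i p1 IH]; intros p2.
  - left. exists p2. auto.
  - destruct p2 as [|j p2].
    + right; left. exists (i :: p1). auto.
    + destruct (Nat.eq_dec i j) as [<-|Hij].
      * destruct (IH p2) as [[q ->]|[[q ->]|[c [i' [j' [a [b [H [-> ->]]]]]]]]].
        -- left. exists q. auto.
        -- right; left. exists q. auto.
        -- right; right. exists (i :: c), i', j', a, b. auto.
      * right; right. exists [], i, j, p1, p2. auto.
Qed.

Definition upd (s : nat -> term) x u : nat -> term :=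
  fun y => if Nat.eq_dec y x then u else s y.

Lemma NoDup_app_disj {A} (l1 l2 : list A) x : NoDup (l1 ++ l2) -> In x l1 -> ~ In x l2.
Proof.
  induction l1; simpl; intros H Hx; [contradiction|].
  inversion H; subst. destruct Hx as [->|Hx]; auto.
  intros Hl. apply H2. apply in_or_app; auto.
Qed.

Lemma set_nth_lin (s : nat -> term) x u (ts : list term) i a :
  NoDup (flat_map vars ts) -> nth_error ts i = Some a -> In x (vars a) ->
  set_nth (map (subst s) ts) i (subst (upd s x u) a) = map (subst (upd s x u)) ts.
Proof.
  revert i; induction ts as [|b ts IH]; intros [|i]; simpl; intros Hnd Hi Hx; try discriminate.
  - injection Hi; intros; subst. f_equal. apply map_ext_in. intros c Hc.
    apply subst_ext. intros y Hy. unfold upd. destruct (Nat.eq_dec y x) as [->|]; auto.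
    exfalso. eapply (NoDup_app_disj _ _ x Hnd); auto. apply in_flat_map; eauto.
  - f_equal.
    + apply subst_ext. intros y Hy. unfold upd. destruct (Nat.eq_dec y x) as [->|]; auto.
      exfalso. eapply (NoDup_app_disj _ _ x Hnd); auto. apply in_flat_map.
      exists a. split; auto. eapply nth_error_In; eauto.
    + apply IH; auto. eapply NoDup_app_remove_l; eauto.
Qed.

Lemma lin_rep l q x (s : nat -> term) u :
  NoDup (vars l) -> subterm_at l q = Some (Var x) ->
  replace_at (subst s l) q u = subst (upd s x u) l.
Proof.
  revert l; induction q as [|i q IH]; intros l Hnd Hq; simpl in Hq.
  - injection Hq; intros; subst. simpl. unfold upd. destruct (Nat.eq_dec x x); congruence.
  - destruct l as [y|f ts]; [discriminate|].
    destruct (nth_error ts i) as [t|] eqn:E; [|discriminate]. simpl.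
    rewrite (nth_nth_error (map (subst s) ts) i (subst s t)) by (rewrite nth_error_map, E; reflexivity).
    simpl in Hnd. f_equal.
    assert (Hnd' : NoDup (vars t)).
    { clear -Hnd E. revert i E Hnd; induction ts as [|b ts IH]; intros [|i] E Hnd; simpl in *;
        try discriminate.
      - injection E; intros; subst. eapply NoDup_app_remove_r; eauto.
      - eapply IH; eauto. eapply NoDup_app_remove_l; eauto. }
    rewrite (IH t Hnd' Hq). apply set_nth_lin; auto.
    apply vars_st. eauto.
Qed.

End TermLemmas.

Arguments Var {F} _.
Arguments Fun {F} _ _.
Arguments vars {F} _.
Arguments upd {F} _ _ _.

Section Rewriting.
Variable F : Type.
Local Notation term := (term F).
Implicit Types (t u v w a b c : term) (E B : rules F).

Definition ctx_closed (T : relation term) :=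
  forall a b u p v, T a b -> subterm_at u p = Some v -> T (replace_at u p a) (replace_at u p b).
Definition subst_closed (T : relation term) :=
  forall a b (s : nat -> term), T a b -> T (subst s a) (subst s b).

Lemma rstep_ctx E : ctx_closed (rstep E).
Proof.
  intros a b u p v [q [l [r [s [Hlr [Hq ->]]]]]] Hp.
  exists (p ++ q), l, r, s. split; auto. split.
  - rewrite (st_app_some _ _ _ _ _ (st_rep _ _ _ _ a Hp)). auto.
  - rewrite (rep_app _ _ _ _ _ _ (st_rep _ _ _ _ a Hp)). rewrite (rep_rep _ _ _ _ _ _ Hp). auto.
Qed.

Lemma rstep_subst E : subst_closed (rstep E).
Proof.
  intros a b s [q [l [r [s' [Hlr [Hq ->]]]]]].
  exists q, l, r, (fun x => subst s (s' x)). split; auto. split.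
  - rewrite <- subst_subst. apply st_subst; auto.
  - rewrite <- subst_subst. apply rep_subst with (u := subst s' l); auto.
Qed.

Lemma rstep_root E l r (s : nat -> term) : E l r -> rstep E (subst s l) (subst s r).
Proof. intros H. exists [], l, r, s. simpl. auto. Qed.

Lemma rstep_rule E l r : E l r -> rstep E l r.
Proof. intros H. rewrite <- (subst_id _ l), <- (subst_id _ r). apply rstep_root; auto. Qed.

Lemma rt_ctx T : ctx_closed T -> ctx_closed (clos_refl_trans _ T).
Proof.
  intros HT a b u p v H Hp. induction H.
  - apply rt_step; eauto.
  - apply rt_refl.
  - eapply rt_trans; eauto.
Qed.

Lemma rt_subst T : subst_closed T -> subst_closed (clos_refl_trans _ T).
Proof.
  intros HT a b s H. induction H; [apply rt_step; auto|apply rt_refl|eapply rt_trans; eauto].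
Qed.

Lemma sym_ctx T : ctx_closed T -> ctx_closed (fun a b => T a b \/ T b a).
Proof. intros HT a b u p v [H|H] Hp; [left|right]; eauto. Qed.

Lemma sym_subst T : subst_closed T -> subst_closed (fun a b => T a b \/ T b a).
Proof. intros HT a b s [H|H]; [left|right]; eauto. Qed.

Lemma conv_step_ctx E : ctx_closed (conv_step E).
Proof. apply sym_ctx, rstep_ctx. Qed.
Lemma conv_step_subst E : subst_closed (conv_step E).
Proof. apply sym_subst, rstep_subst. Qed.
Lemma conv_ctx E : ctx_closed (conv E).
Proof. apply rt_ctx, conv_step_ctx. Qed.
Lemma conv_subst E : subst_closed (conv E).
Proof. apply rt_subst, conv_step_subst. Qed.
Lemma rsteps_ctx E : ctx_closed (rsteps E).
Proof. apply rt_ctx, rstep_ctx. Qed.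
Lemma rsteps_subst E : subst_closed (rsteps E).
Proof. apply rt_subst, rstep_subst. Qed.

Lemma conv_sym E a b : conv E a b -> conv E b a.
Proof.
  intros H; induction H.
  - apply rt_step. destruct H; [right|left]; auto.
  - apply rt_refl.
  - eapply rt_trans; eauto.
Qed.

Lemma simB_sym B a b : simB B a b -> simB B b a.
Proof. apply conv_sym. Qed.
Lemma simB_trans B a b c : simB B a b -> simB B b c -> simB B a c.
Proof. intros; eapply rt_trans; eauto. Qed.
Lemma simB_refl B a : simB B a a.
Proof. apply rt_refl. Qed.

Lemma rstep_in E (T : relation term) :
  ctx_closed T -> subst_closed T -> (forall l r, E l r -> T l r) ->
  forall a b, rstep E a b -> T a b.
Proof.
  intros HC HS HE a b [p [l [r [s [Hlr [Hp ->]]]]]].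
  rewrite <- (rep_id _ _ _ _ Hp) at 1. eapply HC; eauto.
Qed.

Lemma rstep_mono E1 E2 : (forall l r, E1 l r -> E2 l r) -> forall a b, rstep E1 a b -> rstep E2 a b.
Proof. intros H a b [p [l [r [s [Hlr Hr]]]]]. exists p, l, r, s. auto. Qed.

Lemma rstep_union E1 E2 a b : rstep (runion E1 E2) a b <-> rstep E1 a b \/ rstep E2 a b.
Proof.
  split.
  - intros [p [l [r [s [[H|H] Hr]]]]]; [left|right]; exists p, l, r, s; auto.
  - intros [H|H]; revert H; apply rstep_mono; intros l r H; [left|right]; auto.
Qed.

Lemma rstep_inv E a b : rstep E a b -> rstep (fun l r => E r l) b a.
Proof.
  intros [p [l [r [s [Hlr [Hp ->]]]]]].
  exists p, r, l, s. split; auto. split.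
  - eapply st_rep; eauto.
  - rewrite (rep_rep _ _ _ _ _ _ Hp). symmetry. eapply rep_id; eauto.
Qed.

Lemma sym_rules_step E a b : rstep (sym_rules E) a b <-> conv_step E a b.
Proof.
  split.
  - intros [p [l [r [s [[H|H] Hr]]]]].
    + left. exists p, l, r, s; auto.
    + right. apply (rstep_inv (fun l r => E r l)). exists p, l, r, s; auto.
  - intros [H|H].
    + revert H. apply rstep_mono. intros l r H; left; auto.
    + apply rstep_inv in H. revert H. apply rstep_mono. intros l r H; right; auto.
Qed.

Definition child_closed (T : relation term) :=
  forall f pre post a b, T a b -> T (Fun f (pre ++ a :: post)) (Fun f (pre ++ b :: post)).

Lemma ctx_child T : ctx_closed T -> child_closed T.
Proof.
  intros HC f pre post a b H.
  assert (Hs : subterm_at (Fun f (pre ++ a :: post)) [length pre] = Some a).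
  { simpl. rewrite nth_error_app_len. auto. }
  pose proof (HC a b _ _ _ H Hs) as H'. simpl in H'.
  rewrite !set_nth_app in H'. auto.
Qed.

Lemma args_rt T f us vs : child_closed T ->
  Forall2 (clos_refl_trans _ T) us vs -> clos_refl_trans _ T (Fun f us) (Fun f vs).
Proof.
  intros HC H. cut (forall pre, clos_refl_trans _ T (Fun f (pre ++ us)) (Fun f (pre ++ vs))).
  { intros Hc. apply (Hc []). }
  induction H as [|a b us vs Hab Hrest IH]; intros pre; [apply rt_refl|].
  eapply rt_trans with (y := Fun f (pre ++ b :: us)).
  - clear -HC Hab. induction Hab.
    + apply rt_step. apply HC. auto.
    + apply rt_refl.
    + eapply rt_trans; eauto.
  - specialize (IH (pre ++ [b])). rewrite <- !app_assoc in IH. simpl in IH. auto.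
Qed.

Lemma subst_mono T (s s' : nat -> term) t : child_closed T ->
  (forall x, clos_refl_trans _ T (s x) (s' x)) -> clos_refl_trans _ T (subst s t) (subst s' t).
Proof.
  intros HC Hs. induction t as [x|f ts IH] using term_ind2; simpl; auto.
  apply args_rt; auto. induction ts as [|a ts IHts]; simpl; constructor.
  - inversion IH; auto.
  - apply IHts. inversion IH; auto.
Qed.

Lemma rep_mono T l q x (s : nat -> term) u : child_closed T ->
  subterm_at l q = Some (Var x) -> clos_refl_trans _ T (s x) u ->
  clos_refl_trans _ T (replace_at (subst s l) q u) (subst (upd s x u) l).
Proof.
  intros HC. revert l. induction q as [|i q IH]; intros l Hq Hu; simpl in Hq.
  - injection Hq; intros; subst. simpl. unfold upd. destruct (Nat.eq_dec x x); [apply rt_refl|congruence].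
  - destruct l as [y|f ts]; [discriminate|].
    destruct (nth_error ts i) as [t|] eqn:E; [|discriminate]. simpl.
    rewrite (nth_nth_error (map (subst s) ts) i (subst s t)) by (rewrite nth_error_map, E; reflexivity).
    apply args_rt; auto.
    assert (Hall : forall c, clos_refl_trans _ T (subst s c) (subst (upd s x u) c)).
    { intros c. apply subst_mono; auto. intros y. unfold upd.
      destruct (Nat.eq_dec y x) as [->|]; auto. apply rt_refl. }
    clear -IH Hq E Hall Hu. revert i E. induction ts as [|b ts IHts]; intros [|i] E; simpl in *; try discriminate.
    + injection E; intros; subst. constructor; [apply IH; auto|].
      clear IHts E. induction ts; simpl; constructor; auto.
    + constructor; auto.
Qed.

Lemma subst_neq (s s' : nat -> term) t x : In x (vars t) -> s x <> s' x -> subst s t <> subst s' t.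
Proof. intros Hx Hn He. apply Hn. eapply subst_ext_inv; eauto. Qed.

End Rewriting.

Arguments Var {F} _.
Arguments Fun {F} _ _.
Arguments vars {F} _.
Arguments upd {F} _ _ _.

Section Unif.
Variable F : Type.
Local Notation term := (term F).
Implicit Types (t u v w a b c : term).

Fixpoint size t : nat :=
  match t with
  | Var _ => 1
  | Fun _ ts => S ((fix sz (l : list term) : nat :=
                      match l with [] => 0 | u :: l' => size u + sz l' end) ts)
  end.

Fixpoint sz (l : list term) : nat := match l with [] => 0 | u :: l' => size u + sz l' end.

Lemma size_Fun f ts : size (Fun f ts) = S (sz ts).
Proof. reflexivity. Qed.

Lemma size_pos t : 1 <= size t.
Proof. destruct t; simpl; lia. Qed.

Lemma size_in f ts t : In t ts -> size t < size (Fun f ts).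
Proof.
  rewrite size_Fun. induction ts; simpl; intros H; [contradiction|].
  destruct H as [->|H]; [lia|]. specialize (IHts H). lia.
Qed.

Lemma size_var_le (s : nat -> term) t x : In x (vars t) -> size (s x) <= size (subst s t).
Proof.
  induction t as [y|f ts IH] using term_ind2; simpl; intros Hx.
  - destruct Hx as [->|[]]; auto.
  - apply in_flat_map in Hx. destruct Hx as [a [Ha Hxa]].
    rewrite Forall_forall in IH. specialize (IH a Ha Hxa).
    assert (size (subst s a) < size (Fun f (map (subst s) ts))) by (apply size_in, in_map; auto).
    simpl in *. lia.
Qed.

Lemma occurs (s : nat -> term) x b : In x (vars b) -> b <> Var x -> size (s x) < size (subst s b).
Proof.
  intros Hx Hb. destruct b as [y|f ts].
  - simpl in Hx. destruct Hx as [->|[]]. congruence.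
  - simpl in Hx. apply in_flat_map in Hx. destruct Hx as [a [Ha Hxa]].
    pose proof (size_var_le s a x Hxa).
    assert (size (subst s a) < size (subst s (Fun f ts))).
    { change (subst s (Fun f ts)) with (Fun f (map (subst s) ts)). apply size_in. apply in_map; auto. }
    lia.
Qed.

Definition unifies (s : nat -> term) (eqs : list (term * term)) :=
  Forall (fun p => subst s (fst p) = subst s (snd p)) eqs.
Definition mgu_of (s : nat -> term) eqs :=
  unifies s eqs /\ forall tau, unifies tau eqs -> exists rho, forall x, tau x = subst rho (s x).
Definition eqs_vars (eqs : list (term * term)) := flat_map (fun p => vars (fst p) ++ vars (snd p)) eqs.
Definition nv eqs := length (nodup Nat.eq_dec (eqs_vars eqs)).
Fixpoint esize (eqs : list (term * term)) :=
  match eqs with [] => 0 | p :: r => size (fst p) + size (snd p) + esize r end.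

Lemma nodup_len_incl (l1 l2 : list nat) : incl l1 l2 ->
  length (nodup Nat.eq_dec l1) <= length (nodup Nat.eq_dec l2).
Proof.
  intros H. apply NoDup_incl_length; [apply NoDup_nodup|].
  intros y Hy. apply nodup_In. apply nodup_In in Hy. auto.
Qed.

Lemma nodup_len_lt (l1 l2 : list nat) x : incl l1 l2 -> In x l2 -> ~ In x l1 ->
  length (nodup Nat.eq_dec l1) < length (nodup Nat.eq_dec l2).
Proof.
  intros H Hx Hn.
  assert (S (length (nodup Nat.eq_dec l1)) <= length (nodup Nat.eq_dec l2)); [|lia].
  change (S (length (nodup Nat.eq_dec l1))) with (length (x :: nodup Nat.eq_dec l1)).
  apply NoDup_incl_length.
  - constructor; [rewrite nodup_In; auto|apply NoDup_nodup].
  - intros y [<-|Hy]; apply nodup_In; auto. apply nodup_In in Hy. auto.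
Qed.

Lemma vars_subst (s : nat -> term) t y : In y (vars (subst s t)) -> exists z, In z (vars t) /\ In y (vars (s z)).
Proof.
  induction t as [x|f ts IH] using term_ind2; simpl; intros H.
  - exists x. auto.
  - apply in_flat_map in H. destruct H as [a [Ha Hy]]. apply in_map_iff in Ha.
    destruct Ha as [b [<- Hb]]. rewrite Forall_forall in IH.
    destruct (IH b Hb Hy) as [z [Hz1 Hz2]]. exists z. split; auto. apply in_flat_map; eauto.
Qed.

Lemma unifies_combine (s : nat -> term) ts us : length ts = length us ->
  (map (subst s) ts = map (subst s) us <-> unifies s (combine ts us)).
Proof.
  revert us; induction ts as [|a ts IH]; intros [|b us] Hl; simpl in *; try discriminate.
  - split; intros; constructor.
  - injection Hl; intros Hl'. split.
    + intros H. injection H; intros H1 H2. constructor; auto. apply IH; auto.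
    + intros H. inversion H; subst. f_equal; auto. apply IH; auto.
Qed.

Lemma esize_combine ts us : length ts = length us -> esize (combine ts us) = sz ts + sz us.
Proof.
  revert us; induction ts as [|a ts IH]; intros [|b us] Hl; simpl in *; try discriminate; auto.
  injection Hl; intros. rewrite IH; auto. lia.
Qed.

Lemma vars_combine ts us y : In y (eqs_vars (combine ts us)) ->
  In y (flat_map vars ts) \/ In y (flat_map vars us).
Proof.
  revert us; induction ts as [|a ts IH]; intros [|b us]; simpl; auto.
  unfold eqs_vars; simpl. intros H. apply in_app_or in H. destruct H as [H|H].
  - apply in_app_or in H. destruct H; [left|right]; apply in_or_app; auto.
  - destruct (IH us H); [left|right]; apply in_or_app; auto.
Qed.

Lemma eqs_vars_cons a b rest y :
  In y (eqs_vars ((a, b) :: rest)) <-> In y (vars a) \/ In y (vars b) \/ In y (eqs_vars rest).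
Proof.
  unfold eqs_vars; simpl. rewrite !in_app_iff. tauto.
Qed.

Lemma eqs_vars_app l1 l2 y : In y (eqs_vars (l1 ++ l2)) <-> In y (eqs_vars l1) \/ In y (eqs_vars l2).
Proof. unfold eqs_vars. rewrite flat_map_app, in_app_iff. tauto. Qed.

Lemma unif_var_case x b rest :
  (forall eqs, nv eqs < nv ((Var x, b) :: rest) -> (exists tau, unifies tau eqs) -> exists s, mgu_of s eqs) ->
  b <> Var x ->
  (exists tau, unifies tau ((Var x, b) :: rest)) -> exists s, mgu_of s ((Var x, b) :: rest).
Proof.
  intros IH Hb [tau Htau].
  inversion Htau as [|? ? Hhd Hrest]; subst. simpl in Hhd.
  destruct (in_dec Nat.eq_dec x (vars b)) as [Hin|Hnin].
  - exfalso. pose proof (occurs tau x b Hin Hb). rewrite <- Hhd in H. lia.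
  - set (th := upd Var x b).
    set (eqs' := map (fun p => (subst th (fst p), subst th (snd p))) rest).
    assert (Hth : forall (tt : nat -> term) z, subst tt (Var x) = subst tt b -> subst tt (th z) = tt z).
    { intros tt z H. unfold th, upd. destruct (Nat.eq_dec z x) as [->|]; simpl in *; auto. }
    assert (Hun : forall tt, unifies tt ((Var x, b) :: rest) -> unifies tt eqs').
    { intros tt Htt. inversion Htt as [|? ? H0 H1]; subst. simpl in H0.
      unfold eqs'. clear -H0 H1 Hth. induction rest as [|[a1 a2] rest IHr]; simpl; constructor.
      - inversion H1; subst. simpl in *. rewrite !subst_subst.
        rewrite (subst_ext _ (fun z => subst tt (th z)) tt) by (intros; apply Hth; auto).
        rewrite (subst_ext _ (fun z => subst tt (th z)) tt a2) by (intros; apply Hth; auto). auto.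
      - apply IHr. inversion H1; auto. }
    assert (Hvy : forall c y, In y (vars (subst th c)) -> y <> x /\ (In y (vars b) \/ In y (vars c))).
    { intros c y Hy. apply vars_subst in Hy. destruct Hy as [z [Hz Hyz]].
      unfold th, upd in Hyz. destruct (Nat.eq_dec z x) as [->|Hzx].
      - split; auto. intros ->. auto.
      - simpl in Hyz. destruct Hyz as [->|[]]. auto. }
    assert (Hnv : nv eqs' < nv ((Var x, b) :: rest)).
    { unfold nv. apply nodup_len_lt with (x := x).
      - intros y Hy. unfold eqs', eqs_vars in Hy. apply in_flat_map in Hy.
        destruct Hy as [[c1 c2] [Hc Hy]]. apply in_map_iff in Hc. destruct Hc as [[d1 d2] [Heq Hd]].
        injection Heq; intros; subst. simpl in Hy. apply eqs_vars_cons.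
        assert (Hd' : forall y, In y (vars d1) \/ In y (vars d2) -> In y (eqs_vars rest)).
        { intros y' Hy'. unfold eqs_vars. apply in_flat_map. exists (d1, d2). split; auto.
          simpl. apply in_or_app. auto. }
        apply in_app_or in Hy. destruct Hy as [Hy|Hy]; apply Hvy in Hy; destruct Hy as [_ [Hy|Hy]]; auto.
      - apply eqs_vars_cons. left. simpl. auto.
      - intros Hy. unfold eqs', eqs_vars in Hy. apply in_flat_map in Hy.
        destruct Hy as [[c1 c2] [Hc Hy]]. apply in_map_iff in Hc. destruct Hc as [[d1 d2] [Heq Hd]].
        injection Heq; intros; subst. simpl in Hy.
        apply in_app_or in Hy. destruct Hy as [Hy|Hy]; apply Hvy in Hy; destruct Hy as [Hy _]; auto. }
    destruct (IH eqs' Hnv (ex_intro _ tau (Hun tau Htau))) as [s' [Hs'1 Hs'2]].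
    exists (fun y => subst s' (th y)). split.
    + constructor.
      * simpl. unfold th, upd. destruct (Nat.eq_dec x x); [|congruence].
        rewrite <- subst_subst. f_equal. rewrite <- (subst_id _ b) at 1.
        apply subst_ext. intros z Hz. destruct (Nat.eq_dec z x) as [->|]; auto. contradiction.
      * unfold eqs' in Hs'1. clear -Hs'1. induction rest as [|[a1 a2] rest IHr]; constructor.
        -- inversion Hs'1; subst. simpl in *. rewrite <- !subst_subst. auto.
        -- apply IHr. inversion Hs'1; auto.
    + intros tt Htt. destruct (Hs'2 tt (Hun tt Htt)) as [rho Hrho]. exists rho.
      intros y. inversion Htt as [|? ? H0 H1]; subst. simpl in H0.
      unfold th, upd. destruct (Nat.eq_dec y x) as [->|]; simpl; auto.
      rewrite H0, subst_subst. apply subst_ext. intros; auto.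
Qed.

Lemma unif_main : forall n m eqs, nv eqs <= n -> esize eqs <= m ->
  (exists tau, unifies tau eqs) -> exists s, mgu_of s eqs.
Proof.
  intros n. induction n as [n IHn] using (well_founded_induction lt_wf).
  intros m. induction m as [|m IHm]; intros eqs Hn Hm Hu.
  - destruct eqs as [|[a b] rest].
    + exists Var. split; [constructor|]. intros tau _. exists tau. intros; auto.
    + simpl in Hm. pose proof (size_pos a). lia.
  - assert (IHv : forall eqs', nv eqs' < nv eqs -> (exists tau, unifies tau eqs') -> exists s, mgu_of s eqs').
    { intros eqs' Hlt Hu'. apply (IHn (nv eqs')) with (m := esize eqs'); auto. lia. }
    destruct eqs as [|[a b] rest].
    + exists Var. split; [constructor|]. intros tau _. exists tau. intros; auto.
    + assert (Hrest : (exists tau, unifies tau rest) -> exists s, mgu_of s rest).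
      { apply IHm.
        - unfold nv in *. eapply Nat.le_trans; [|apply Hn]. apply nodup_len_incl.
          intros y Hy. apply eqs_vars_cons. auto.
        - simpl in Hm. pose proof (size_pos a). pose proof (size_pos b). lia. }
      destruct a as [x|f ts].
      * destruct (classic (b = Var x)) as [->|Hb].
        -- destruct Hu as [tau Htau]. destruct Hrest as [s [Hs1 Hs2]].
           { exists tau. inversion Htau; auto. }
           exists s. split.
           ++ constructor; auto.
           ++ intros tt Htt. apply Hs2. inversion Htt; auto.
        -- apply unif_var_case; auto.
      * destruct b as [y|g us].
        -- assert (Hsw : forall tt, unifies tt ((Fun f ts, Var y) :: rest) <-> unifies tt ((Var y, Fun f ts) :: rest)).
           { intros tt; split; intros H; inversion H; subst; constructor; auto. }
           destruct (unif_var_case y (Fun f ts) rest) as [s [Hs1 Hs2]].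
           ++ intros eqs' Hlt. apply IHv. unfold nv in *. eapply Nat.lt_le_trans; [apply Hlt|].
              apply nodup_len_incl. intros z Hz. apply eqs_vars_cons. apply eqs_vars_cons in Hz. tauto.
           ++ discriminate.
           ++ destruct Hu as [tau Htau]. exists tau. apply Hsw; auto.
           ++ exists s. split; [apply Hsw; auto|]. intros tt Htt. apply Hs2. apply Hsw; auto.
        -- destruct (classic (f = g /\ length ts = length us)) as [[<- Hl]|Hfg].
           ++ set (eqs' := combine ts us ++ rest).
              assert (Hequ : forall tt, unifies tt ((Fun f ts, Fun f us) :: rest) <-> unifies tt eqs').
              { intros tt. unfold eqs', unifies. rewrite Forall_app. split.
                - intros H. inversion H; subst. simpl in *. split; auto.
                  apply unifies_combine; auto. injection H2; auto.
                - intros [H1 H2]. constructor; auto. simpl. f_equal. apply unifies_combine; auto. }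
              destruct (IHm eqs') as [s [Hs1 Hs2]].
              ** unfold nv in *. eapply Nat.le_trans; [|apply Hn]. apply nodup_len_incl.
                 intros z Hz. unfold eqs' in Hz. apply eqs_vars_app in Hz. apply eqs_vars_cons.
                 destruct Hz as [Hz|Hz]; auto. apply vars_combine in Hz. simpl. tauto.
              ** unfold eqs'. change (esize ((Fun f ts, Fun f us) :: rest)) with (size (Fun f ts) + size (Fun f us) + esize rest) in Hm. rewrite !size_Fun in Hm.
                 assert (esize (combine ts us ++ rest) = esize (combine ts us) + esize rest).
                 { clear. induction (combine ts us); simpl; lia. }
                 rewrite H, esize_combine; auto. lia.
              ** destruct Hu as [tau Htau]. exists tau. apply Hequ; auto.
              ** exists s. split; [apply Hequ; auto|]. intros tt Htt. apply Hs2. apply Hequ; auto.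
           ++ exfalso. destruct Hu as [tau Htau]. inversion Htau; subst. simpl in H1.
              injection H1; intros Hm' <-. apply Hfg. split; auto.
              rewrite <- (length_map (subst tau) ts), <- (length_map (subst tau) us). congruence.
Qed.

Lemma mgu_exists (u v : term) (tau : nat -> term) : subst tau u = subst tau v -> exists s, mgu s u v.
Proof.
  intros H. destruct (unif_main _ _ [(u, v)] (le_n _) (le_n _)) as [s [Hs1 Hs2]].
  - exists tau. constructor; auto.
  - exists s. split.
    + inversion Hs1; auto.
    + intros tt Htt. apply Hs2. constructor; auto.
Qed.
End Unif.

Arguments Var {F} _.
Arguments Fun {F} _ _.
Arguments vars {F} _.
Arguments upd {F} _ _ _.
Arguments ctx_closed {F} _.
Arguments subst_closed {F} _.

Section Abstract.
Variable F : Type.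
Local Notation term := (term F).
Implicit Types (t u v w a b c d x y z s : term).
Variables (R B : rules F) (gt : relation term).
Hypothesis gt_trans : forall x y z, gt x y -> gt y z -> gt x z.
Hypothesis gt_irr : forall x, ~ gt x x.
Hypothesis gt_wf : well_founded (fun x y => gt y x).
Hypothesis gt_compat : forall s s' t' t, simB B s s' -> gt s' t' -> simB B t' t -> gt s t.
Hypothesis Rs_gt : forall a b, rstep R a b -> gt a b.

Definition cstep a b := rstep R a b \/ rstep R b a \/ conv_step B a b.

Inductive cpath (P : term -> Prop) : term -> term -> Prop :=
| cp_refl x : P x -> cpath P x x
| cp_step x y z : P x -> cstep x y -> cpath P y z -> cpath P x z.

Definition J := joinable_mod B R.

Definition Good s t := simB B s t \/ exists c d,
  (rstep R s c \/ (s = c /\ gt t s)) /\ (rstep R t d \/ (t = d /\ gt s t)) /\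
  cpath (fun x => gt s x \/ gt t x) c d.

Lemma gt_sl a b c : simB B a b -> gt b c -> gt a c.
Proof. intros; eapply gt_compat; eauto. apply simB_refl. Qed.
Lemma gt_sr a b c : gt a b -> simB B b c -> gt a c.
Proof. intros; eapply gt_compat; eauto. apply simB_refl. Qed.
Lemma simB_gt_False a b : simB B a b -> gt a b -> False.
Proof. intros H1 H2. apply (gt_irr b). eapply gt_compat; eauto. apply simB_sym; auto. apply simB_refl. Qed.

Lemma cstep_sym a b : cstep a b -> cstep b a.
Proof. intros [H|[H|[H|H]]]; unfold cstep; auto; right; right; [right|left]; auto. Qed.

Lemma cpath_head P a b : cpath P a b -> P a.
Proof. intros H; inversion H; auto. Qed.
Lemma cpath_last P a b : cpath P a b -> P b.
Proof. intros H; induction H; auto. Qed.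
Lemma cpath_trans P a b c : cpath P a b -> cpath P b c -> cpath P a c.
Proof. intros H; induction H; intros; auto. econstructor; eauto. Qed.
Lemma cpath_one P a b : P a -> cstep a b -> P b -> cpath P a b.
Proof. intros; econstructor; eauto. constructor; auto. Qed.
Lemma cpath_sym P a b : cpath P a b -> cpath P b a.
Proof.
  intros H; induction H; [constructor; auto|].
  eapply cpath_trans; eauto. apply cpath_one; auto. eapply cpath_head; eauto. apply cstep_sym; auto.
Qed.
Lemma cpath_weak (P Q : term -> Prop) a b : (forall x, P x -> Q x) -> cpath P a b -> cpath Q a b.
Proof. intros HPQ H; induction H; econstructor; eauto. Qed.

Lemma simB_cpath (P : term -> Prop) a b : simB B a b -> (forall x, simB B a x -> P x) -> cpath P a b.
Proof.
  intros H. apply clos_rt_rt1n in H. induction H; intros HP.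
  - constructor. apply HP, simB_refl.
  - econstructor. apply HP, simB_refl. right; right; eauto.
    apply IHclos_refl_trans_1n. intros x' Hx'. apply HP. eapply rt_trans; [apply rt_step; eauto|auto].
Qed.

Lemma rsteps_cpath (P : term -> Prop) a b : rsteps R a b -> P a ->
  (forall x y, P x -> rstep R x y -> P y) -> cpath P a b.
Proof.
  intros H. apply clos_rt_rt1n in H. induction H; intros Ha HP.
  - constructor; auto.
  - econstructor; eauto. left; auto.
Qed.

Lemma rsteps_ge a b : rsteps R a b -> a = b \/ gt a b.
Proof.
  intros H; induction H; auto.
  destruct IHclos_refl_trans1 as [->|H1]; auto. destruct IHclos_refl_trans2 as [->|H2]; eauto.
Qed.

Section CR.
Hypothesis HP : forall w s t, rstep R w s -> rstep R w t -> cpath (gt w) s t.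
Hypothesis HC : forall w s t, rstep R w s -> conv_step B w t -> exists d, rstep R t d /\ cpath (gt w) d s.

Definition le_w w x := gt w x \/ simB B w x.
Definition M w := forall s t, cpath (le_w w) s t -> J s t.

Lemma J_steps_l a a' b : rsteps R a a' -> J a' b -> J a b.
Proof. intros H [x [y [H1 [H2 H3]]]]. exists x, y. split; auto. eapply rt_trans; eauto. Qed.
Lemma J_steps_r a b b' : rsteps R b b' -> J a b' -> J a b.
Proof. intros H [x [y [H1 [H2 H3]]]]. exists x, y. split; auto. split; auto. eapply rt_trans; eauto. Qed.

Lemma down_path y a b : rsteps R y a -> simB B a b -> cpath (le_w y) y b.
Proof.
  intros H1 H2. eapply cpath_trans.
  - apply rsteps_cpath with (P := le_w y); eauto.
    + right. apply simB_refl.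
    + intros x0 y0 [Hx|Hx] Hs; left; [eapply gt_trans|eapply gt_sl]; eauto.
  - apply simB_cpath; auto. intros x0 Hx0. destruct (rsteps_ge _ _ H1) as [<-|Hg].
    + right; auto.
    + left. eapply gt_sr; eauto.
Qed.

Lemma low_join (P : term -> Prop) : (forall v, P v -> M v) -> forall s t, cpath P s t -> J s t.
Proof.
  intros HM s t H. induction H as [x Hx|x y z Hx Hxy Hyz IH].
  - exists x, x. repeat split; apply rt_refl.
  - destruct IH as [a [b [Hya [Hab Hzb]]]].
    destruct Hxy as [Hxy|[Hyx|Hb]].
    + exists a, b. split; auto. eapply rt_trans; [apply rt_step|]; eauto.
    + assert (HJ : J x b).
      { apply (HM y (cpath_head _ _ _ Hyz)). apply cp_step with (y := y).
        * left. apply Rs_gt; auto.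
        * right; left; auto.
        * eapply down_path; eauto. }
      eapply J_steps_r; eauto.
    + assert (HJ : J x b).
      { apply (HM y (cpath_head _ _ _ Hyz)). apply cp_step with (y := y).
        * right. apply simB_sym. apply rt_step; auto.
        * right; right; auto.
        * eapply down_path; eauto. }
      eapply J_steps_r; eauto.
Qed.

Lemma K_lemma a b : simB B a b -> forall c, rstep R a c -> exists d, rstep R b d /\ cpath (gt a) d c.
Proof.
  intros H. apply clos_rt_rt1n in H. induction H as [a|a a1 b Ha1 Hb IH]; intros c Hc.
  - exists c. split; [auto|]. apply cp_refl. apply Rs_gt. auto.
  - destruct (HC a c a1 Hc Ha1) as [d1 [Hd1 Hp1]].
    destruct (IH d1 Hd1) as [d [Hd Hp]]. exists d. split; auto.
    eapply cpath_trans; [|apply Hp1].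
    eapply cpath_weak; [|apply Hp]. intros x0 Hx0. eapply gt_sl; eauto. apply rt_step; auto.
Qed.

Definition G w s t := simB B s t \/ exists c d,
  (rstep R s c \/ (s = c /\ gt w s)) /\ (rstep R t d \/ (t = d /\ gt w t)) /\ cpath (gt w) c d.

Lemma le_w_step w x y : le_w w x -> rstep R x y -> gt w y.
Proof. intros [H|H] Hs; [eapply gt_trans|eapply gt_sl]; eauto. Qed.

Lemma top_not_low w x : simB B w x -> gt w x -> False.
Proof. apply simB_gt_False. Qed.

Lemma shape w s t : cpath (le_w w) s t -> G w s t.
Proof.
  intros H. induction H as [x Hx|v0 v1 vk H0 Hst Hrest IH].
  - left. apply simB_refl.
  - pose proof (cpath_head _ _ _ Hrest) as H1.
    destruct IH as [Hs|[c [d [Hc [Hd Hp]]]]].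
    + destruct Hst as [Hst|[Hst|Hst]].
      * assert (Hv1 : gt w v1) by (apply (le_w_step w v0 v1 H0 Hst)).
        right. exists v1, vk. split; [left; auto|]. split.
        -- right. split; auto. exact (gt_sr _ _ _ Hv1 Hs).
        -- apply simB_cpath; auto. intros x Hx; exact (gt_sr _ _ _ Hv1 Hx).
      * assert (Hv0 : gt w v0) by (apply (le_w_step w v1 v0 H1 Hst)).
        destruct H1 as [H1|H1].
        -- right. exists v0, vk. split; [right; split; auto|]. split; [right; split; auto; exact (gt_sr _ _ _ H1 Hs)|].
           apply cp_step with (y := v1); auto. right; left; auto.
           apply simB_cpath; auto. intros x Hx; exact (gt_sr _ _ _ H1 Hx).
        -- destruct (K_lemma v1 vk Hs v0 Hst) as [d [Hd Hp]].
           right. exists v0, d. split; [right; split; auto|]. split; [left; auto|].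
           apply cpath_sym. eapply cpath_weak; [|apply Hp]. intros x Hx; exact (gt_sl _ _ _ H1 Hx).
      * left. eapply rt_trans; [apply rt_step|]; eauto.
    + assert (Hcd : gt w v1 -> cpath (gt w) v1 d).
      { intros Hv1. destruct Hc as [Hc|[<- _]]; auto.
        apply cp_step with (y := c); auto. left; auto. }
      destruct Hst as [Hst|[Hst|Hst]].
      * assert (Hv1 : gt w v1) by (apply (le_w_step w v0 v1 H0 Hst)).
        right. exists v1, d. split; [left; auto|]. split; auto.
      * assert (Hv0 : gt w v0) by (apply (le_w_step w v1 v0 H1 Hst)).
        destruct H1 as [H1|H1].
        -- right. exists v0, d. split; [right; split; auto|]. split; auto.
           apply cp_step with (y := v1); auto. right; left; auto.
        -- destruct Hc as [Hc|[_ Hc]]; [|exfalso; eapply top_not_low; eauto].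
           pose proof (HP v1 v0 c Hst Hc) as Hpc.
           right. exists v0, d. split; [right; split; auto|]. split; auto.
           eapply cpath_trans; [|apply Hp]. eapply cpath_weak; [|apply Hpc]. intros x Hx; exact (gt_sl _ _ _ H1 Hx).
      * destruct H1 as [H1|H1].
        -- assert (Hv0 : gt w v0). { eapply gt_sr; eauto. apply simB_sym, rt_step; auto. }
           right. exists v0, d. split; [right; split; auto|]. split; auto.
           apply cp_step with (y := v1); auto. right; right; auto.
        -- destruct Hc as [Hc|[_ Hc]]; [|exfalso; eapply top_not_low; eauto].
           assert (Hb : conv_step B v1 v0) by (destruct Hst; [right|left]; auto).
           destruct (HC v1 c v0 Hc Hb) as [d0 [Hd0 Hp0]].
           right. exists d0, d. split; [left; auto|]. split; auto.
           eapply cpath_trans; [|apply Hp]. eapply cpath_weak; [|apply Hp0]. intros x Hx; exact (gt_sl _ _ _ H1 Hx).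
Qed.

Lemma all_M w : M w.
Proof.
  induction w as [w IH] using (well_founded_induction gt_wf).
  intros s t H. destruct (shape w s t H) as [Hs|[c [d [Hc [Hd Hp]]]]].
  - exists s, t. repeat split; auto; apply rt_refl.
  - assert (HJ : J c d) by (eapply low_join; eauto).
    apply J_steps_l with c; [destruct Hc as [Hc|[<- _]]; [apply rt_step; auto|apply rt_refl]|].
    apply J_steps_r with d; [destruct Hd as [Hd|[<- _]]; [apply rt_step; auto|apply rt_refl]|].
    auto.
Qed.

Theorem abstract_CR s t : conv (runion R B) s t -> J s t.
Proof.
  intros H. apply (low_join (fun _ => True)); [intros; apply all_M|].
  apply clos_rt_rt1n in H. induction H; [constructor; auto|].
  econstructor; eauto. destruct H as [H|H]; apply rstep_union in H; destruct H as [H|H]; unfold cstep; auto.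
  right; right; left; auto. right; right; right; auto.
Qed.
End CR.

Lemma steps_or a b : rsteps R a b -> a = b \/ exists a1, rstep R a a1 /\ rsteps R a1 b.
Proof.
  intros H. apply clos_rt_rt1n in H. destruct H; auto.
  right. exists y. split; auto. apply clos_rt1n_rt; auto.
Qed.

Lemma Good_sym s t : Good s t -> Good t s.
Proof.
  intros [H|[c [d [Hc [Hd Hp]]]]]; [left; apply simB_sym; auto|].
  right. exists d, c. split; auto. split; auto. apply cpath_sym.
  eapply cpath_weak; [|apply Hp]. intros x [H|H]; auto.
Qed.

Lemma Good_simB s t : simB B s t -> Good s t.
Proof. left; auto. Qed.

Lemma Good_rule a b : rstep R a b -> Good a b.
Proof.
  intros H. right. exists b, b. split; [left; auto|]. split; [right; split; auto|].
  constructor. left; auto.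
Qed.

Lemma path_down (P : term -> Prop) a b : rsteps R a b -> (forall x, a = x \/ gt a x -> P x) -> cpath P a b.
Proof.
  intros H HP. apply clos_rt_rt1n in H. induction H.
  - constructor. apply HP; auto.
  - apply cp_step with (y := y); [apply HP; auto|left; auto|].
    apply IHclos_refl_trans_1n. intros x0 [<-|Hx]; apply HP; right; auto. eapply gt_trans; eauto.
Qed.

Lemma plus_gt a a1 b : rstep R a a1 -> rsteps R a1 b -> gt a b.
Proof. intros H1 H2. destruct (rsteps_ge _ _ H2) as [<-|H]; auto. eapply gt_trans; eauto. Qed.

Lemma down_P (P : term -> Prop) a a1 b : rstep R a a1 -> rsteps R a1 b -> (forall z, gt a z -> P z) -> cpath P a1 b.
Proof.
  intros H1 H2 HP. apply path_down; auto. intros z [<-|Hz]; apply HP; auto. eapply gt_trans; eauto.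
Qed.

Lemma half_case s t t1 y : simB B s y -> rstep R t t1 -> rsteps R t1 y -> Good s t.
Proof.
  intros Hsy Ht1 Ht1y. pose proof (plus_gt _ _ _ Ht1 Ht1y) as Hty.
  assert (Hts : gt t s) by (eapply gt_sr; eauto; apply simB_sym; auto).
  right. exists s, t1. split; [right; split; auto|]. split; [left; auto|].
  eapply cpath_trans.
  - apply simB_cpath; eauto. intros z Hz. right. eapply gt_sr; [apply Hty|].
    eapply rt_trans; [apply simB_sym|]; eauto.
  - apply cpath_sym. eapply down_P; eauto.
Qed.

Lemma J_Good s t : J s t -> Good s t.
Proof.
  intros [x [y [Hsx [Hxy Hty]]]].
  destruct (steps_or _ _ Hsx) as [<-|[s1 [Hs1 Hs1x]]]; destruct (steps_or _ _ Hty) as [<-|[t1 [Ht1 Ht1y]]].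
  - left; auto.
  - eapply half_case; eauto.
  - apply Good_sym. eapply half_case; eauto. apply simB_sym; auto.
  - pose proof (plus_gt _ _ _ Hs1 Hs1x) as Hsx'.
    right. exists s1, t1. split; [left; auto|]. split; [left; auto|].
    eapply cpath_trans; [eapply down_P; eauto|].
    eapply cpath_trans.
    + apply simB_cpath; eauto. intros z Hz. left. eapply gt_sr; eauto.
    + apply cpath_sym. eapply down_P; eauto.
Qed.

Lemma Good_trans s u t : Good s u -> gt s u -> Good u t -> Good s t.
Proof.
  intros Hsu Hgt Hut.
  destruct Hsu as [Hsu|[c [d [Hc [Hd Hp]]]]]; [exfalso; eapply simB_gt_False; eauto|].
  destruct Hc as [Hc|[_ Hc]]; [|exfalso; apply (gt_irr s); eauto].
  assert (Hpu : cpath (gt s) c u).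
  { eapply cpath_trans; [eapply cpath_weak; [|apply Hp]; intros z [Hz|Hz]; eauto|].
    destruct Hd as [Hd|[<- _]]; [|constructor; auto].
    apply cpath_one; [eapply gt_trans; eauto|right; left; auto|auto]. }
  destruct Hut as [Hut|[c' [d' [Hc' [Hd' Hp']]]]].
  - right. exists c, t. split; [left; auto|]. split; [right; split; auto; eapply gt_sr; eauto|].
    eapply cpath_trans; [eapply cpath_weak; [|apply Hpu]; auto|].
    apply simB_cpath; auto. intros z Hz. left. eapply gt_sr; eauto.
  - right. exists c, d'. split; [left; auto|].
    split; [destruct Hd' as [Hd'|[<- Hd']]; [left; auto|right; split; eauto]|].
    eapply cpath_trans; [eapply cpath_weak; [|apply Hpu]; auto|].
    destruct Hc' as [Hc'|[<- _]].
    + apply cp_step with (y := c'); [left; auto|left; auto|].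
      eapply cpath_weak; [|apply Hp']. intros z [Hz|Hz]; eauto.
    + eapply cpath_weak; [|apply Hp']. intros z [Hz|Hz]; eauto.
Qed.

Lemma Good_peak w s t : Good s t -> gt w s -> gt w t -> cpath (gt w) s t.
Proof.
  intros [H|[c [d [Hc [Hd Hp]]]]] Hs Ht.
  - apply simB_cpath; auto. intros x Hx; exact (gt_sr _ _ _ Hs Hx).
  - assert (H1 : cpath (gt w) s c).
    { destruct Hc as [Hc|[<- _]]; [|constructor; auto].
      apply cpath_one; [exact Hs|left; exact Hc|eapply gt_trans; [exact Hs|apply Rs_gt; exact Hc]]. }
    assert (H2 : cpath (gt w) c d).
    { eapply cpath_weak; [|apply Hp]. intros z [Hz|Hz]; eauto. }
    assert (H3 : cpath (gt w) d t).
    { destruct Hd as [Hd|[<- _]]; [|constructor; auto].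
      apply cpath_one; [eapply gt_trans; [exact Ht|apply Rs_gt; exact Hd]|right; left; exact Hd|exact Ht]. }
    eapply cpath_trans; eauto. eapply cpath_trans; eauto.
Qed.

Lemma Good_cliff w s t : Good s t -> gt w s -> simB B w t -> exists d, rstep R t d /\ cpath (gt w) d s.
Proof.
  intros [H|[c [d [Hc [Hd Hp]]]]] Hs Ht.
  - exfalso. apply (simB_gt_False w s); auto. eapply rt_trans; eauto. apply simB_sym; auto.
  - assert (Hwt : forall z, gt t z -> gt w z) by (intros; eapply gt_sl; eauto).
    destruct Hd as [Hd|[<- Hd]]; [|exfalso; apply (simB_gt_False w t Ht); eapply gt_trans; eauto].
    exists d. split; auto. apply cpath_sym.
    eapply cpath_trans; [|eapply cpath_weak; [|apply Hp]; intros z [Hz|Hz]; eauto].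
    destruct Hc as [Hc|[<- _]]; [|constructor; auto].
    apply cpath_one; auto; [left; auto|]. eapply gt_trans; eauto.
Qed.

Lemma cpath_conv (P : term -> Prop) a b : cpath P a b -> conv (runion R B) a b.
Proof.
  intros H; induction H; [apply rt_refl|]. eapply rt_trans; eauto. apply rt_step.
  destruct H0 as [H0|[H0|[H0|H0]]].
  - left. apply rstep_union; auto.
  - right. apply rstep_union; auto.
  - left. apply rstep_union; auto.
  - right. apply rstep_union; auto.
Qed.

Lemma simB_conv a b : simB B a b -> conv (runion R B) a b.
Proof.
  intros H. apply (cpath_conv (fun _ => True)). apply simB_cpath; auto.
Qed.

Lemma Good_conv s t : Good s t -> conv (runion R B) s t.
Proof.
  intros [H|[c [d [Hc [Hd Hp]]]]]; [apply simB_conv; auto|].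
  eapply rt_trans; [|eapply rt_trans; [eapply cpath_conv; eauto|]].
  - destruct Hc as [Hc|[<- _]]; [apply rt_step; left; apply rstep_union; auto|apply rt_refl].
  - destruct Hd as [Hd|[<- _]]; [apply rt_step; right; apply rstep_union; auto|apply rt_refl].
Qed.

Section Closure.
Hypothesis gt_ctx : ctx_closed gt.
Hypothesis gt_subst : subst_closed gt.

Lemma cpath_map (P Q : term -> Prop) (phi : term -> term) a b :
  (forall x, P x -> Q (phi x)) -> (forall x y, cstep x y -> cstep (phi x) (phi y)) ->
  cpath P a b -> cpath Q (phi a) (phi b).
Proof. intros H1 H2 H; induction H; econstructor; eauto. Qed.

Lemma Good_ctx a b th u p v : Good a b -> subterm_at u p = Some v ->
  Good (replace_at u p (subst th a)) (replace_at u p (subst th b)).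
Proof.
  intros HG Hp. set (phi := fun x => replace_at u p (subst th x)).
  assert (HR : forall x y, rstep R x y -> rstep R (phi x) (phi y)).
  { intros; apply rstep_ctx with (v := v); auto. apply rstep_subst; auto. }
  assert (HB : forall x y, simB B x y -> simB B (phi x) (phi y)).
  { intros; apply conv_ctx with (v := v); auto. apply conv_subst; auto. }
  assert (HBs : forall x y, conv_step B x y -> conv_step B (phi x) (phi y)).
  { intros; apply conv_step_ctx with (v := v); auto. apply conv_step_subst; auto. }
  assert (Hg : forall x y, gt x y -> gt (phi x) (phi y)).
  { intros; apply gt_ctx with (v := v); auto. }
  change (Good (phi a) (phi b)).
  destruct HG as [H|[c [d [Hc [Hd Hpath]]]]]; [left; auto|].
  right. exists (phi c), (phi d). split; [destruct Hc as [Hc|[<- Hc]]; auto|].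
  split; [destruct Hd as [Hd|[<- Hd]]; auto|].
  eapply cpath_map; [| |apply Hpath].
  - intros x [Hx|Hx]; auto.
  - intros x y [H|[H|H]]; unfold cstep; auto.
Qed.
End Closure.

End Abstract.

Arguments Var {F} _.
Arguments Fun {F} _ _.
Arguments vars {F} _.
Arguments upd {F} _ _ _.
Arguments ctx_closed {F} _.
Arguments subst_closed {F} _.
Arguments Good {F} _ _ _ _ _.
Arguments cpath {F} _ _ _ _ _.
Arguments J {F} _ _ _ _.

Section Overlap.
Variable F : Type.
Local Notation term := (term F).
Implicit Types (t u v w a b c d s : term).
Variables (R B : rules F) (gt : relation term).
Hypothesis gt_trans : forall x y z, gt x y -> gt y z -> gt x z.
Hypothesis gt_irr : forall x, ~ gt x x.
Hypothesis gt_wf : well_founded (fun x y => gt y x).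
Hypothesis gt_compat : forall s s' t' t, simB B s s' -> gt s' t' -> simB B t' t -> gt s t.
Hypothesis Rs_gt : forall a b, rstep R a b -> gt a b.
Hypothesis gt_ctx : ctx_closed gt.
Hypothesis gt_subst : subst_closed gt.

Definition inner_prime u := forall q v, q <> [] -> subterm_at u q = Some v -> normal_form R v.

Definition maxl (l : list nat) := fold_right max 0 l.
Lemma maxl_lt l x : In x l -> x < S (maxl l).
Proof. induction l; simpl; intros H; [contradiction|]. destruct H as [->|H]; [lia|]. specialize (IHl H). lia. Qed.

Definition swapN (N x : nat) := if x <? N then x + N else if x <? N + N then x - N else x.
Lemma swapN_inv N x : swapN N (swapN N x) = x.
Proof.
  unfold swapN.
  repeat match goal with |- context [?a <? ?b] => destruct (Nat.ltb_spec a b) end; lia.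
Qed.

Lemma subst_comp (tau sg th : nat -> term) t :
  (forall x, tau x = subst th (sg x)) -> subst tau t = subst th (subst sg t).
Proof. intros H. rewrite subst_subst. apply subst_ext. intros; auto. Qed.

Section Crit.
Variables (Si So : rules F).
Hypothesis HCP : forall s t, pcp R Si So s t -> Good R B gt s t.
Hypothesis HvSo : forall l r, So l r -> forall x, In x (vars r) -> In x (vars l).

Lemma crit w p q lo ro so li ri si s t :
  So lo ro -> subterm_at w p = Some (subst so lo) -> t = replace_at w p (subst so ro) ->
  Si li ri -> subterm_at w (p ++ q) = Some (subst si li) -> s = replace_at w (p ++ q) (subst si ri) ->
  inner_prime (subst si li) ->
  Good R B gt s t \/
  (exists q1 q2 x, q = q1 ++ q2 /\ subterm_at lo q1 = Some (Var x) /\ subterm_at (so x) q2 = Some (subst si li)).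
Proof.
  intros Ho Hwp Ht Hi Hwq Hs Hpr.
  rewrite (st_app_some _ _ _ _ _ Hwp) in Hwq.
  destruct (st_subst_inv _ _ _ _ _ Hwq) as [[f [ts Hf]]|Hv]; [|right; auto].
  left.
  assert (Hfs : subst so (Fun f ts) = subst si li).
  { rewrite (st_subst _ so _ _ _ Hf) in Hwq. injection Hwq; auto. }
  set (N := S (maxl (vars li ++ vars ri ++ vars lo ++ vars ro))).
  assert (HN : forall x, In x (vars li ++ vars ri ++ vars lo ++ vars ro) -> x < N) by (intros; apply maxl_lt; auto).
  set (rho := swapN N).
  set (li' := subst (fun x => Var (rho x)) li).
  set (ri' := subst (fun x => Var (rho x)) ri).
  set (tau := fun x => if x <? N then so x else si (rho x)).
  assert (Hren : forall t0, (forall x, In x (vars t0) -> x < N) ->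
            subst tau (subst (fun x => Var (rho x)) t0) = subst si t0).
  { intros t0 H1. rewrite subst_subst. apply subst_ext. intros x Hx. simpl.
    specialize (H1 x Hx). unfold tau.
    assert (Hr : rho x = x + N) by (unfold rho, swapN; destruct (Nat.ltb_spec x N); lia).
    rewrite Hr. destruct (Nat.ltb_spec (x + N) N); [lia|]. rewrite <- Hr. unfold rho. rewrite swapN_inv. auto. }
  assert (Hli : subst tau li' = subst si li).
  { apply Hren; auto. intros; apply HN; rewrite !in_app_iff; auto. }
  assert (Hri : subst tau ri' = subst si ri).
  { apply Hren; auto. intros; apply HN; rewrite !in_app_iff; auto. }
  assert (Hlow : forall t0, (forall x, In x (vars t0) -> x < N) -> subst tau t0 = subst so t0).
  { intros t0 H1. apply subst_ext. intros x Hx. unfold tau. specialize (H1 x Hx).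
    destruct (x <? N) eqn:E; auto. apply Nat.ltb_ge in E. lia. }
  assert (Hlo : subst tau lo = subst so lo) by (apply Hlow; intros; apply HN; rewrite !in_app_iff; auto).
  assert (Hro : subst tau ro = subst so ro) by (apply Hlow; intros; apply HN; rewrite !in_app_iff; auto).
  assert (Hft : subst tau (Fun f ts) = subst so (Fun f ts)).
  { apply Hlow; intros x Hx; apply HN. rewrite !in_app_iff. right; right; left. eapply vars_sub; eauto. }
  assert (Hun : subst tau li' = subst tau (Fun f ts)) by congruence.
  destruct (mgu_exists _ _ _ _ Hun) as [sg [Hsg1 Hsg2]].
  destruct (Hsg2 tau Hun) as [th Hth].
  assert (Hc : forall t0, subst tau t0 = subst th (subst sg t0)) by (intros; apply subst_comp; auto).
  destruct (classic (q = [] /\ is_variant li' ri' lo ro)) as [[Hq0 [pi [Hpi [Hl' Hr']]]]|Hnv].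
  - (* root variant: s = t *)
    subst q. rewrite app_nil_r in Hs. simpl in Hf. injection Hf; intros Hf'.
    assert (Heq : subst si ri = subst so ro).
    { rewrite <- Hri, <- Hro, Hr'. rewrite subst_subst. apply subst_ext. intros x Hx. simpl.
      apply (subst_ext_inv _ (fun x => subst tau (Var (pi x))) tau lo).
      - rewrite <- subst_subst, <- Hl', Hli, <- Hfs, <- Hf', <- Hlo. auto.
      - eapply HvSo; eauto. }
    subst. rewrite Heq. left. apply simB_refl.
  - assert (Hvar1 : forall x, In x (vars li' ++ vars ri') -> N <= x).
    { intros x Hx. apply in_app_or in Hx.
      destruct Hx as [Hx|Hx]; apply vars_subst in Hx; destruct Hx as [z [Hz Hxz]]; simpl in Hxz;
        destruct Hxz as [<-|[]]; unfold rho, swapN;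
        (assert (z < N) by (apply HN; rewrite !in_app_iff; auto));
        destruct (z <? N) eqn:E; try lia; apply Nat.ltb_ge in E; lia. }
    assert (Hpcp : pcp R Si So (replace_at (subst sg lo) q (subst sg ri')) (subst sg ro)).
    { exists li', ri', lo, ro, q, sg, f, ts. split; [|split; [|split; [|split; [|split; [|split; [|split; [|split]]]]]]].
      - exists li, ri. split; auto. exists rho. split; [exists rho; split; intros; apply swapN_inv|]. auto.
      - exists lo, ro. split; auto. exists (fun x => x). split; [exists (fun x => x); auto|].
        change (fun x => Var x) with (@Var F). rewrite !subst_id. auto.
      - intros x Hx Hx'. apply Hvar1 in Hx. assert (x < N) by (apply HN; rewrite !in_app_iff in *; tauto). lia.
      - auto.
      - intros Hq0 Hiv. apply Hnv. auto.
      - split; auto.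
      - auto.
      - auto.
      - intros q' u Hq' Hu Hred. destruct Hred as [u' Hu'].
        apply (Hpr q' (subst th u)); auto.
        + rewrite <- (st_subst _ th _ _ _ Hu). rewrite <- Hc, Hft, Hfs. auto.
        + exists (subst th u'). apply rstep_subst; auto. }
    pose proof (Good_ctx _ R B gt gt_ctx gt_subst _ _ th w p _ (HCP _ _ Hpcp) Hwp) as HG.
    rewrite <- Hc, Hro, <- Ht in HG.
    rewrite (rep_subst _ th _ _ (subst sg (Fun f ts))) in HG by (apply st_subst; auto).
    rewrite <- !Hc, Hlo, Hri in HG.
    rewrite Hs, (rep_app _ _ _ _ _ _ Hwp). auto.
Qed.
End Crit.

Section Assemble.
Hypothesis HLL : left_linear R.
Hypothesis HvR : forall l r, R l r -> forall x, In x (vars r) -> In x (vars l).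
Hypothesis HvB : vars_preserving B.
Hypothesis HRR : forall s t, pcp R R R s t -> Good R B gt s t.
Hypothesis HRB : forall s t, pcp R R (sym_rules B) s t -> Good R B gt s t.
Hypothesis HBR : forall s t, pcp R (sym_rules B) R s t -> Good R B gt s t.

Lemma HvBs : forall l r, sym_rules B l r -> forall x, In x (vars r) -> In x (vars l).
Proof. intros l r [H|H] x Hx; apply (HvB _ _ H); auto. Qed.

Lemma GJ s t : J R B s t -> Good R B gt s t.
Proof. apply J_Good; auto. Qed.

Lemma var_common w p q1 q2 x lo so (Si : rules F) li ri si s :
  subterm_at w p = Some (subst so lo) -> Si li ri ->
  subterm_at lo q1 = Some (Var x) -> subterm_at (so x) q2 = Some (subst si li) ->
  s = replace_at w (p ++ q1 ++ q2) (subst si ri) ->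
  exists u', rstep Si (so x) u' /\ s = replace_at w p (replace_at (subst so lo) q1 u').
Proof.
  intros Hwp Hi Hq1 Hq2 Hs. exists (replace_at (so x) q2 (subst si ri)). split.
  - exists q2, li, ri, si. auto.
  - rewrite Hs, (rep_app _ _ _ _ _ _ Hwp). f_equal.
    apply rep_app. apply (st_subst _ so _ _ _ Hq1).
Qed.

Lemma var_outerR w p q1 q2 x lo ro so (Si : rules F) li ri si s t :
  R lo ro -> subterm_at w p = Some (subst so lo) -> t = replace_at w p (subst so ro) ->
  Si li ri -> subterm_at lo q1 = Some (Var x) -> subterm_at (so x) q2 = Some (subst si li) ->
  s = replace_at w (p ++ q1 ++ q2) (subst si ri) ->
  exists u', rstep Si (so x) u' /\ rstep R s (replace_at w p (subst (upd so x u') ro)).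
Proof.
  intros Ho Hwp Ht Hi Hq1 Hq2 Hs.
  destruct (var_common w p q1 q2 x lo so Si li ri si s Hwp Hi Hq1 Hq2 Hs) as [u' [Hu' Hs']].
  exists u'. split; auto. rewrite (lin_rep _ lo q1 x so u' (HLL _ _ Ho) Hq1) in Hs'.
  exists p, lo, ro, (upd so x u'). split; auto. split.
  - rewrite Hs'. eapply st_rep; eauto.
  - rewrite Hs'. rewrite (rep_rep _ _ _ _ _ _ Hwp). auto.
Qed.

Lemma upd_rt (T : relation term) so x u' : clos_refl_trans _ T (so x) u' ->
  forall y, clos_refl_trans _ T (so y) (upd so x u' y).
Proof. intros H y. unfold upd. destruct (Nat.eq_dec y x) as [->|]; auto. apply rt_refl. Qed.

Lemma res_RR w p q lo ro so li ri si s t :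
  R lo ro -> subterm_at w p = Some (subst so lo) -> t = replace_at w p (subst so ro) ->
  R li ri -> subterm_at w (p ++ q) = Some (subst si li) -> s = replace_at w (p ++ q) (subst si ri) ->
  inner_prime (subst si li) -> Good R B gt s t.
Proof.
  intros Ho Hwp Ht Hi Hwq Hs Hpr.
  destruct (crit R R HRR HvR w p q lo ro so li ri si s t Ho Hwp Ht Hi Hwq Hs Hpr)
    as [HG|[q1 [q2 [x [-> [Hq1 Hq2]]]]]]; auto.
  destruct (var_outerR w p q1 q2 x lo ro so R li ri si s t Ho Hwp Ht Hi Hq1 Hq2 Hs) as [u' [Hu' Hsv]].
  apply GJ. exists (replace_at w p (subst (upd so x u') ro)), (replace_at w p (subst (upd so x u') ro)).
  split; [apply rt_step; auto|]. split; [apply simB_refl|].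
  rewrite Ht. apply (rsteps_ctx _ R) with (v := subst so lo); auto.
  apply subst_mono. apply ctx_child, rstep_ctx. apply upd_rt. apply rt_step; auto.
Qed.

Lemma res_RB w p q lo ro so li ri si s t :
  R lo ro -> subterm_at w p = Some (subst so lo) -> t = replace_at w p (subst so ro) ->
  sym_rules B li ri -> subterm_at w (p ++ q) = Some (subst si li) -> s = replace_at w (p ++ q) (subst si ri) ->
  inner_prime (subst si li) -> Good R B gt s t.
Proof.
  intros Ho Hwp Ht Hi Hwq Hs Hpr.
  destruct (crit (sym_rules B) R HBR HvR w p q lo ro so li ri si s t Ho Hwp Ht Hi Hwq Hs Hpr)
    as [HG|[q1 [q2 [x [-> [Hq1 Hq2]]]]]]; auto.
  destruct (var_outerR w p q1 q2 x lo ro so (sym_rules B) li ri si s t Ho Hwp Ht Hi Hq1 Hq2 Hs) as [u' [Hu' Hsv]].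
  apply GJ. exists (replace_at w p (subst (upd so x u') ro)), t.
  split; [apply rt_step; auto|]. split; [|apply rt_refl].
  apply simB_sym. rewrite Ht. apply (conv_ctx _ B) with (v := subst so lo); auto.
  apply subst_mono. apply ctx_child, conv_step_ctx. apply upd_rt. apply rt_step.
  apply sym_rules_step; auto.
Qed.

Lemma res_BR w p q lo ro so li ri si s t :
  sym_rules B lo ro -> subterm_at w p = Some (subst so lo) -> t = replace_at w p (subst so ro) ->
  R li ri -> subterm_at w (p ++ q) = Some (subst si li) -> s = replace_at w (p ++ q) (subst si ri) ->
  inner_prime (subst si li) -> Good R B gt s t.
Proof.
  intros Ho Hwp Ht Hi Hwq Hs Hpr.
  destruct (crit R (sym_rules B) HRB HvBs w p q lo ro so li ri si s t Ho Hwp Ht Hi Hwq Hs Hpr)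
    as [HG|[q1 [q2 [x [-> [Hq1 Hq2]]]]]]; auto.
  destruct (var_common w p q1 q2 x lo so R li ri si s Hwp Hi Hq1 Hq2 Hs) as [u' [Hu' Hs']].
  apply GJ. exists (replace_at w p (subst (upd so x u') lo)), (replace_at w p (subst (upd so x u') ro)).
  split; [|split].
  - rewrite Hs'. apply (rsteps_ctx _ R) with (v := subst so lo); auto.
    apply rep_mono; auto. apply ctx_child, rstep_ctx. apply rt_step; auto.
  - apply rt_step. apply sym_rules_step.
    exists p, lo, ro, (upd so x u'). split; auto. split.
    + eapply st_rep; eauto.
    + rewrite (rep_rep _ _ _ _ _ _ Hwp). auto.
  - rewrite Ht. apply (rsteps_ctx _ R) with (v := subst so lo); auto.
    apply subst_mono. apply ctx_child, rstep_ctx. apply upd_rt. apply rt_step; auto.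
Qed.


Definition has_redex u := exists q l r sg, R l r /\ subterm_at u q = Some (subst sg l).

Lemma nf_redex v : ~ normal_form R v -> has_redex v.
Proof.
  intros H. apply NNPP. intros Hn. apply H. intros [v' [q [l [r [sg [Hlr [Hq _]]]]]]].
  apply Hn. exists q, l, r, sg. auto.
Qed.

Lemma innermost u : has_redex u ->
  exists q l r sg, R l r /\ subterm_at u q = Some (subst sg l) /\ inner_prime (subst sg l).
Proof.
  induction u as [x|f ts IH] using term_ind2; intros [q [l [r [sg [Hlr Hq]]]]].
  - destruct q as [|i q]; [|discriminate]. exists [], l, r, sg. repeat split; auto.
    simpl in Hq. injection Hq; intros Hq'. rewrite <- Hq'. intros [|i q'] v Hne Hv; [congruence|discriminate].
  - assert (Hc : forall i q0 l0 r0 sg0, R l0 r0 -> subterm_at (Fun f ts) (i :: q0) = Some (subst sg0 l0) ->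
              exists q l r sg, R l r /\ subterm_at (Fun f ts) q = Some (subst sg l) /\ inner_prime (subst sg l)).
    { intros i q0 l0 r0 sg0 H0 Hq0. simpl in Hq0.
      destruct (nth_error ts i) as [ti|] eqn:E; [|discriminate].
      rewrite Forall_forall in IH. destruct (IH ti (nth_error_In _ _ E)) as [q1 [l1 [r1 [sg1 [H1 [H2 H3]]]]]].
      - exists q0, l0, r0, sg0. auto.
      - exists (i :: q1), l1, r1, sg1. simpl. rewrite E. auto. }
    destruct q as [|i q0]; [|eapply Hc; eauto].
    simpl in Hq. injection Hq; intros Hq'.
    destruct (classic (inner_prime (subst sg l))) as [Hp|Hp].
    + exists [], l, r, sg. simpl. rewrite Hq'. auto.
    + unfold inner_prime in Hp. apply not_all_ex_not in Hp. destruct Hp as [q' Hp].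
      apply not_all_ex_not in Hp. destruct Hp as [v Hp].
      apply imply_to_and in Hp. destruct Hp as [Hne Hp]. apply imply_to_and in Hp. destruct Hp as [Hv Hnf].
      destruct (nf_redex _ Hnf) as [q1 [l1 [r1 [sg1 [H1 H2]]]]].
      destruct q' as [|i q']; [congruence|].
      apply (Hc i (q' ++ q1) l1 r1 sg1 H1). rewrite <- Hq' in Hv.
      change (i :: q' ++ q1) with ((i :: q') ++ q1). rewrite (st_app_some _ _ _ _ _ Hv). auto.
Qed.

Lemma newredex w P r0 : subterm_at w P = Some r0 -> ~ inner_prime r0 ->
  exists q l r sg, q <> [] /\ R l r /\ subterm_at w (P ++ q) = Some (subst sg l) /\ inner_prime (subst sg l).
Proof.
  intros HP Hnp. unfold inner_prime in Hnp. apply not_all_ex_not in Hnp. destruct Hnp as [q' Hp].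
  apply not_all_ex_not in Hp. destruct Hp as [v Hp].
  apply imply_to_and in Hp. destruct Hp as [Hne Hp]. apply imply_to_and in Hp. destruct Hp as [Hv Hnf].
  destruct (innermost v (nf_redex _ Hnf)) as [q0 [l [r [sg [H1 [H2 H3]]]]]].
  exists (q' ++ q0), l, r, sg. split; [destruct q'; simpl; congruence|]. split; auto. split; auto.
  rewrite (st_app_some _ _ _ _ _ HP), (st_app_some _ _ _ _ _ Hv). auto.
Qed.

Lemma rstep_at (E : rules F) w p l r sg : E l r -> subterm_at w p = Some (subst sg l) ->
  rstep E w (replace_at w p (subst sg r)).
Proof. intros; exists p, l, r, sg; auto. Qed.

Lemma peak_pre w p q lo ro so li ri si s t :
  R lo ro -> subterm_at w p = Some (subst so lo) -> t = replace_at w p (subst so ro) ->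
  R li ri -> subterm_at w (p ++ q) = Some (subst si li) -> s = replace_at w (p ++ q) (subst si ri) ->
  cpath R B (gt w) s t.
Proof.
  intros Ho Hwp Ht Hi Hwq Hs.
  assert (Hws : gt w s) by (apply Rs_gt; rewrite Hs; apply rstep_at with (l := li); auto).
  assert (Hwt : gt w t) by (apply Rs_gt; rewrite Ht; apply rstep_at with (l := lo); auto).
  destruct (classic (inner_prime (subst si li))) as [Hpr|Hnp].
  - apply Good_peak; auto. apply (res_RR w p q lo ro so li ri si s t); auto.
  - destruct (newredex _ _ _ Hwq Hnp) as [q'' [l [r [sg [Hne [Hlr [Hw' Hpr']]]]]]].
    set (w' := replace_at w ((p ++ q) ++ q'') (subst sg r)).
    assert (Hww' : gt w w') by (apply Rs_gt; apply rstep_at with (l := l); auto).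
    assert (G1 : Good R B gt w' t).
    { apply (res_RR w p (q ++ q'') lo ro so l r sg w' t); auto; rewrite app_assoc; auto. }
    assert (G2 : Good R B gt w' s).
    { apply (res_RR w (p ++ q) q'' li ri si l r sg w' s); auto. }
    eapply cpath_trans; [apply cpath_sym; apply Good_peak; eauto|].
    apply Good_peak; auto.
Qed.

Lemma cliff_pre1 w p q lo ro so li ri si s t :
  R lo ro -> subterm_at w p = Some (subst so lo) -> s = replace_at w p (subst so ro) ->
  sym_rules B li ri -> subterm_at w (p ++ q) = Some (subst si li) -> t = replace_at w (p ++ q) (subst si ri) ->
  exists d, rstep R t d /\ cpath R B (gt w) d s.
Proof.
  intros Ho Hwp Hs Hi Hwq Ht.
  assert (Hws : gt w s) by (apply Rs_gt; rewrite Hs; apply rstep_at with (l := lo); auto).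
  assert (Hwt : simB B w t).
  { apply rt_step. apply sym_rules_step. rewrite Ht. apply rstep_at with (l := li); auto. }
  destruct (classic (inner_prime (subst si li))) as [Hpr|Hnp].
  - apply Good_cliff; auto. apply Good_sym. apply (res_RB w p q lo ro so li ri si t s); auto.
  - destruct (newredex _ _ _ Hwq Hnp) as [q'' [l [r [sg [Hne [Hlr [Hw' Hpr']]]]]]].
    set (w' := replace_at w ((p ++ q) ++ q'') (subst sg r)).
    assert (Hww' : gt w w') by (apply Rs_gt; apply rstep_at with (l := l); auto).
    assert (G1 : Good R B gt w' s).
    { apply (res_RR w p (q ++ q'') lo ro so l r sg w' s); auto; rewrite app_assoc; auto. }
    assert (G2 : Good R B gt w' t).
    { apply (res_BR w (p ++ q) q'' li ri si l r sg w' t); auto. }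
    destruct (Good_cliff _ R B gt gt_trans gt_irr gt_compat Rs_gt w w' t G2 Hww' Hwt) as [d [Hd Hp]].
    exists d. split; auto. eapply cpath_trans; [apply Hp|]. apply Good_peak; auto.
Qed.

Lemma cliff_pre2 w p q lo ro so li ri si s t :
  sym_rules B lo ro -> subterm_at w p = Some (subst so lo) -> t = replace_at w p (subst so ro) ->
  R li ri -> subterm_at w (p ++ q) = Some (subst si li) -> s = replace_at w (p ++ q) (subst si ri) ->
  exists d, rstep R t d /\ cpath R B (gt w) d s.
Proof.
  intros Ho Hwp Ht Hi Hwq Hs.
  assert (Hws : gt w s) by (apply Rs_gt; rewrite Hs; apply rstep_at with (l := li); auto).
  assert (Hwt : simB B w t).
  { apply rt_step. apply sym_rules_step. rewrite Ht. apply rstep_at with (l := lo); auto. }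
  destruct (classic (inner_prime (subst si li))) as [Hpr|Hnp].
  - apply Good_cliff; auto. apply (res_BR w p q lo ro so li ri si s t); auto.
  - destruct (newredex _ _ _ Hwq Hnp) as [q'' [l [r [sg [Hne [Hlr [Hw' Hpr']]]]]]].
    set (w' := replace_at w ((p ++ q) ++ q'') (subst sg r)).
    assert (Hww' : gt w w') by (apply Rs_gt; apply rstep_at with (l := l); auto).
    assert (G1 : Good R B gt w' t).
    { apply (res_BR w p (q ++ q'') lo ro so l r sg w' t); auto; rewrite app_assoc; auto. }
    assert (G2 : Good R B gt w' s).
    { apply (res_RR w (p ++ q) q'' li ri si l r sg w' s); auto. }
    destruct (Good_cliff _ R B gt gt_trans gt_irr gt_compat Rs_gt w w' t G1 Hww' Hwt) as [d [Hd Hp]].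
    exists d. split; auto. eapply cpath_trans; [apply Hp|]. apply Good_peak; auto.
Qed.

Lemma par_steps (E1 E2 : rules F) w (P1 P2 : pos) (l1 r1 : term) (s1 : nat -> term) (l2 r2 : term) (s2 : nat -> term) :
  (exists (c0 : pos) i j (a0 b0 : pos), i <> j /\ P1 = c0 ++ i :: a0 /\ P2 = c0 ++ j :: b0) ->
  E1 l1 r1 -> subterm_at w P1 = Some (subst s1 l1) ->
  E2 l2 r2 -> subterm_at w P2 = Some (subst s2 l2) ->
  exists v, rstep E2 (replace_at w P1 (subst s1 r1)) v /\ rstep E1 (replace_at w P2 (subst s2 r2)) v.
Proof.
  intros [c0 [i [j [a0 [b0 [Hij [-> ->]]]]]]] H1 Hp1 H2 Hp2.
  exists (replace_at (replace_at w (c0 ++ i :: a0) (subst s1 r1)) (c0 ++ j :: b0) (subst s2 r2)). split.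
  - apply rstep_at with (l := l2); auto. eapply par_st; eauto.
  - rewrite (par_comm _ _ _ _ _ _ _ _ _ _ _ Hij Hp1 Hp2).
    apply rstep_at with (l := l1); auto. eapply par_st; eauto.
Qed.

Theorem HPeak : forall w s t, rstep R w s -> rstep R w t -> cpath R B (gt w) s t.
Proof.
  intros w s t [p1 [l1 [r1 [s1 [H1 [Hp1 ->]]]]]] [p2 [l2 [r2 [s2 [H2 [Hp2 ->]]]]]].
  destruct (pos_cases p1 p2) as [[q ->]|[[q ->]|Hpar]].
  - apply cpath_sym. apply (peak_pre w p1 q l1 r1 s1 l2 r2 s2); auto.
  - apply (peak_pre w p2 q l2 r2 s2 l1 r1 s1); auto.
  - destruct (par_steps R R w p1 p2 l1 r1 s1 l2 r2 s2 Hpar H1 Hp1 H2 Hp2) as [v [Hv1 Hv2]].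
    apply Good_peak; auto.
    + apply GJ. exists v, v. split; [apply rt_step; auto|]. split; [apply simB_refl|apply rt_step; auto].
    + apply Rs_gt. apply rstep_at with (l := l1); auto.
    + apply Rs_gt. apply rstep_at with (l := l2); auto.
Qed.


Theorem HCliff : forall w s t, rstep R w s -> conv_step B w t -> exists d, rstep R t d /\ cpath R B (gt w) d s.
Proof.
  intros w s t [p1 [l1 [r1 [s1 [H1 [Hp1 ->]]]]]] Hb.
  apply sym_rules_step in Hb. destruct Hb as [p2 [l2 [r2 [s2 [H2 [Hp2 ->]]]]]].
  destruct (pos_cases p1 p2) as [[q ->]|[[q ->]|Hpar]].
  - apply (cliff_pre1 w p1 q l1 r1 s1 l2 r2 s2); auto.
  - apply (cliff_pre2 w p2 q l2 r2 s2 l1 r1 s1); auto.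
  - destruct (par_steps R (sym_rules B) w p1 p2 l1 r1 s1 l2 r2 s2 Hpar H1 Hp1 H2 Hp2) as [v [Hv1 Hv2]].
    apply Good_cliff; auto.
    + apply Good_sym. apply GJ. exists v, (replace_at w p1 (subst s1 r1)).
      split; [apply rt_step; auto|]. split; [|apply rt_refl].
      apply simB_sym. apply rt_step. apply sym_rules_step; auto.
    + apply Rs_gt. apply rstep_at with (l := l1); auto.
    + apply rt_step. apply sym_rules_step. apply rstep_at with (l := l2); auto.
Qed.
End Assemble.
End Overlap.

Arguments Var {F} _.
Arguments Fun {F} _ _.
Arguments vars {F} _.
Arguments upd {F} _ _ _.
Arguments ctx_closed {F} _.
Arguments subst_closed {F} _.
Arguments Good {F} _ _ _ _ _.
Arguments cpath {F} _ _ _ _ _.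
Arguments J {F} _ _ _ _.

Section Final.
Variable F : Type.
Local Notation term := (term F).
Variables (B : rules F) (gt : relation term).
Hypothesis gt_trans : forall x y z, gt x y -> gt y z -> gt x z.
Hypothesis gt_irr : forall x, ~ gt x x.
Hypothesis gt_wf : well_founded (fun x y => gt y x).
Hypothesis gt_compat : forall s s' t' t, simB B s s' -> gt s' t' -> simB B t' t -> gt s t.
Hypothesis gt_ctx : ctx_closed gt.
Hypothesis gt_subst : subst_closed gt.

Lemma no_chain : ~ exists f : nat -> term, forall k, gt (f k) (f (S k)).
Proof.
  intros [f Hf].
  assert (H : forall x, Acc (fun x y => gt y x) x -> forall g : nat -> term, g 0 = x -> (forall k, gt (g k) (g (S k))) -> False).
  { intros x Hacc. induction Hacc as [x _ IH]. intros g Hg0 Hg.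
    apply (IH (g 1)) with (g := fun k => g (S k)); auto. rewrite <- Hg0; apply Hg. }
  apply (H (f 0) (gt_wf _) f); auto.
Qed.

Lemma rules_gt (R : rules F) : (forall l r, R l r -> gt l r) -> forall a b, rstep R a b -> gt a b.
Proof. intros H. apply rstep_in; auto. Qed.

Lemma var_cond (R : rules F) : (forall l r, R l r -> gt l r) ->
  forall l r, R l r -> forall x, In x (vars r) -> In x (vars l).
Proof.
  intros HR l r Hlr x Hx. apply NNPP. intros Hn.
  apply vars_st in Hx. destruct Hx as [q Hq].
  set (sg := upd Var x l).
  assert (Hl : subst sg l = l).
  { rewrite <- (subst_id _ l) at 2. apply subst_ext. intros y Hy. unfold sg, upd.
    destruct (Nat.eq_dec y x) as [->|]; [contradiction|auto]. }
  set (t1 := subst sg r).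
  assert (Hq1 : subterm_at t1 q = Some l).
  { unfold t1. rewrite (st_subst _ sg _ _ _ Hq). simpl. unfold sg, upd. destruct (Nat.eq_dec x x); congruence. }
  assert (H1 : gt l t1) by (rewrite <- Hl at 1; apply gt_subst; auto).
  apply no_chain. exists (fix f k := match k with 0 => l | S k' => replace_at t1 q (f k') end).
  induction k as [|k IH].
  - simpl. rewrite (rep_id _ _ _ _ Hq1). auto.
  - simpl. apply gt_ctx with (v := l); auto.
Qed.

Lemma Good_closed (R : rules F) : ctx_closed (Good R B gt) /\ subst_closed (Good R B gt).
Proof.
  split.
  - intros a b u p v H Hp. pose proof (Good_ctx _ R B gt gt_ctx gt_subst a b Var u p v H Hp) as H'.
    rewrite !subst_id in H'. auto.
  - intros a b th H. pose proof (Good_ctx _ R B gt gt_ctx gt_subst a b th (subst th a) [] (subst th a) H eq_refl) as H'.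
    simpl in H'. auto.
Qed.

Lemma Good_rstep (R X : rules F) : (forall l r, X l r -> Good R B gt l r) -> forall a b, rstep X a b -> Good R B gt a b.
Proof. intros H. destruct (Good_closed R). apply rstep_in; auto. Qed.

Lemma conv_rstep (X Y : rules F) : (forall l r, X l r -> conv Y l r) -> forall a b, rstep X a b -> conv Y a b.
Proof. intros H. apply rstep_in; auto; [apply conv_ctx|apply conv_subst]. Qed.

Lemma conv_incl (X Y : rules F) : (forall a b, rstep X a b -> conv Y a b) -> forall a b, conv X a b -> conv Y a b.
Proof.
  intros H a b Hc. induction Hc.
  - destruct H0; [auto|apply conv_sym; auto].
  - apply rt_refl.
  - eapply rt_trans; eauto.
Qed.

Lemma step_ordered (s1 s2 : state F) : inf_step B gt s1 s2 ->
  (forall l r, snd s1 l r -> gt l r) -> forall l r, snd s2 l r -> gt l r.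
Proof.
  destruct s1 as [E1 R1], s2 as [E2 R2]. simpl. intros HS H.
  destruct HS as [[s [t [u [_ [_ [_ HR]]]]]]|[[s [t [_ [Hgt HR]]]]|[[s [t [_ [_ HR]]]]|
    [[E0 [s [t [u [_ [_ [_ HR]]]]]]]|[[s [t [u [[_ HR] _]]]]|[R0 [s [t [u [[_ HR] [Htu [HR' _]]]]]]]]]]]];
    intros l r Hlr.
  - apply H, HR; auto.
  - apply HR in Hlr. destruct Hlr as [Hlr|[-> ->]]; auto.
  - apply H, HR; auto.
  - apply H, HR; auto.
  - apply H, HR. left; auto.
  - apply HR' in Hlr. destruct Hlr as [Hlr|[-> ->]].
    + apply H, HR. left; auto.
    + eapply gt_trans; [apply H, HR; right; split; eauto|].
      eapply rules_gt; [|apply Htu]. intros; apply H, HR; left; auto.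
Qed.

Lemma da (X Y : rules F) l r : disj_add X Y l r -> (forall a b, Y a b -> X a b) /\ X l r.
Proof.
  intros [_ H]. split.
  - intros a b Hab. apply H. left; auto.
  - apply H. right. split; auto.
Qed.

Lemma step_sound (E : rules F) (s1 s2 : state F) : inf_step B gt s1 s2 ->
  (forall a b, fst s1 a b \/ snd s1 a b -> conv (runion E B) a b) ->
  forall a b, fst s2 a b \/ snd s2 a b -> conv (runion E B) a b.
Proof.
  destruct s1 as [E1 R1], s2 as [E2 R2]. simpl. intros HS H.
  assert (HRc : forall a b, rstep R1 a b -> conv (runion E B) a b).
  { apply conv_rstep. intros; apply H; auto. }
  assert (HBc : forall a b, rstep B a b -> conv (runion E B) a b).
  { apply conv_rstep. intros; apply rt_step; left; apply rstep_rule; right; auto. }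
  assert (Hsym : forall a b, conv (runion E B) a b -> conv (runion E B) b a) by apply conv_sym.
  assert (HE1 : forall a b, E1 a b \/ E1 b a -> conv (runion E B) a b).
  { intros a b [Hab|Hab]; [|apply Hsym]; apply H; auto. }
  destruct HS as [[s [t [u [Hus [Hut [HE HR]]]]]]|[[s [t [Hd [Hgt HR]]]]|[[s [t [Hd [_ HR]]]]|
    [[E0 [s [t [u [Hd [Hsu [HE HR]]]]]]]|[[s [t [u [Hd [Hsu HE]]]]]|[R0 [s [t [u [Hd [Htu [HR' HE]]]]]]]]]]]];
    intros a b [Hab|Hab].
  - apply HE in Hab. destruct Hab as [Hab|[-> ->]]; [apply H; auto|].
    eapply rt_trans; [apply Hsym, HRc, Hus|].
    apply rstep_union in Hut. destruct Hut as [Hut|Hut]; [apply HRc; auto|].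
    apply sym_rules_step in Hut. destruct Hut as [Hut|Hut]; [apply HBc; auto|apply Hsym, HBc; auto].
  - apply HR in Hab. apply H; auto.
  - destruct Hd as [Hd|Hd]; apply da in Hd; apply H; left; apply Hd; auto.
  - apply HR in Hab. destruct Hab as [Hab|[-> ->]]; [apply H; auto|].
    destruct Hd as [Hd|Hd]; apply da in Hd; apply HE1; tauto.
  - apply da in Hd. apply H; left; apply Hd; auto.
  - apply HR in Hab. apply H; auto.
  - apply HE in Hab. destruct Hab as [Hab|[-> ->]].
    + destruct Hd as [Hd|Hd]; apply da in Hd; apply H; left; apply Hd; auto.
    + eapply rt_trans; [apply Hsym, HRc, Hsu|]. destruct Hd as [Hd|Hd]; apply da in Hd; apply HE1; tauto.
  - apply HR in Hab. apply H; auto.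
  - apply HE in Hab. apply da in Hd. destruct Hab as [Hab|[-> ->]]; [apply H; auto|].
    eapply rt_trans; [apply Hsym, HRc|apply H; right; apply Hd].
    revert Hsu. apply rstep_mono. apply Hd.
  - apply da in Hd. apply H. right. apply Hd. auto.
  - apply HE in Hab. apply H; auto.
  - apply da in Hd. apply HR' in Hab. destruct Hab as [Hab|[-> ->]]; [apply H; right; apply Hd; auto|].
    eapply rt_trans; [apply H; right; apply Hd|]. apply HRc. revert Htu. apply rstep_mono. apply Hd.
Qed.

Section Back.
Variable Rn : rules F.
Hypothesis Rn_gt : forall l r, Rn l r -> gt l r.

Lemma step_good (s1 s2 : state F) : inf_step B gt s1 s2 ->
  (forall l r, snd s2 l r -> gt l r) ->
  (forall a b, fst s2 a b \/ snd s2 a b -> Good Rn B gt a b) ->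
  forall a b, fst s1 a b \/ snd s1 a b -> Good Rn B gt a b.
Proof.
  destruct s1 as [E1 R1], s2 as [E2 R2]. simpl. intros HS Hgt2 H.
  assert (HR2 : forall a b, rstep R2 a b -> Good Rn B gt a b).
  { apply Good_rstep. intros; apply H; auto. }
  assert (HR2g : forall a b, rstep R2 a b -> gt a b) by (apply rules_gt; auto).
  assert (Hsym : forall a b, Good Rn B gt a b -> Good Rn B gt b a) by apply Good_sym.
  assert (Htr : forall s u t, Good Rn B gt s u -> gt s u -> Good Rn B gt u t -> Good Rn B gt s t).
  { intros; eapply Good_trans; eauto. apply rules_gt; auto. }
  destruct HS as [[s [t [u [Hus [Hut [HE HR]]]]]]|[[s [t [Hd [Hgt HR]]]]|[[s [t [Hd [Hst HR]]]]|
    [[E0 [s [t [u [Hd [Hsu [HE HR]]]]]]]|[[s [t [u [Hd [Hsu HE]]]]]|[R0 [s [t [u [Hd [Htu [HR' HE]]]]]]]]]]]];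
    intros a b [Hab|Hab].
  - apply H. left. apply HE. left; auto.
  - apply H. right. apply HR; auto.
  - destruct Hd as [Hd|Hd]; destruct Hd as [_ Hd]; apply Hd in Hab; destruct Hab as [Hab|[-> ->]];
      try (solve [apply H; left; auto]).
    + apply H. right. apply HR. right; split; auto.
    + apply Hsym. apply H. right. apply HR. right; split; auto.
  - apply H. right. apply HR. left; auto.
  - destruct Hd as [_ Hd]. apply Hd in Hab. destruct Hab as [Hab|[-> ->]]; [apply H; left; auto|].
    apply Good_simB; auto.
  - apply H. right. apply HR; auto.
  - assert (Hsu' : rstep R2 s u) by (revert Hsu; apply rstep_mono; intros; apply HR; auto).
    assert (Hut : Good Rn B gt u t) by (apply H; left; apply HE; right; split; auto).
    destruct Hd as [Hd|Hd]; destruct Hd as [_ Hd]; apply Hd in Hab; destruct Hab as [Hab|[-> ->]];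
      try (solve [apply H; left; apply HE; left; auto]).
    + eapply Htr; eauto.
    + apply Hsym. eapply Htr; eauto.
  - apply H. right. apply HR; auto.
  - apply H. left. apply HE. left; auto.
  - destruct Hd as [_ Hd]. apply Hd in Hab. destruct Hab as [Hab|[-> ->]]; [apply H; right; auto|].
    eapply Htr; [apply HR2; eauto|apply HR2g; eauto|]. apply H. left. apply HE. right; split; auto.
  - apply H. left. apply HE. auto.
  - destruct Hd as [_ Hd]. apply Hd in Hab. destruct Hab as [Hab|[-> ->]]; [apply H; right; apply HR'; left; auto|].
    assert (Htu' : rstep R2 t u) by (revert Htu; apply rstep_mono; intros; apply HR'; left; auto).
    assert (Hsu : R2 s u) by (apply HR'; right; split; auto).
    eapply Htr; [apply H; right; eauto|apply Hgt2; auto|].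
    apply Hsym. apply HR2; auto.
Qed.
End Back.
End Final.

Arguments Good {F} _ _ _ _ _.
Arguments J {F} _ _ _ _.

Theorem corollary5p7 (F : Type) (B : rules F) (gt : relation (term F))
  (E : rules F) (n : nat) (st : nat -> state F) :
  vars_preserving B ->
  B_compatible_reduction_order B gt ->
  is_run B gt E n st ->
  fair_run B n st ->
  non_failing_run n st ->
  (forall s t, conv (runion E B) s t <-> conv (runion (snd (st n)) B) s t) /\
  terminating_mod B (snd (st n)) /\
  church_rosser_mod B (snd (st n)).
Proof.
  intros HvB Hord Hrun Hfair Hnf.
  destruct Hord as [gtr [girr [gwf [gctx [gsub gcomp]]]]].
  destruct Hrun as [H0E [H0R Hsteps]].
  assert (Hord_i : forall i, i <= n -> forall l r, snd (st i) l r -> gt l r).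
  { induction i as [|i IH]; intros Hi l r Hlr.
    - apply H0R in Hlr. destruct Hlr.
    - apply (step_ordered _ B gt gtr gctx gsub (st i) (st (S i)) (Hsteps i ltac:(lia))); auto.
      apply IH; lia. }
  set (Rn := snd (st n)).
  assert (HRn : forall l r, Rn l r -> gt l r) by (apply Hord_i; auto).
  assert (Rs_gt : forall a b, rstep Rn a b -> gt a b) by (apply rules_gt; auto).
  assert (HG : forall k i, i + k = n -> forall a b, fst (st i) a b \/ snd (st i) a b -> Good Rn B gt a b).
  { induction k as [|k IH]; intros i Hik a b Hab.
    - rewrite Nat.add_0_r in Hik. subst i. destruct Hab as [Hab|Hab].
      + apply Hnf in Hab. destruct Hab.
      + apply Good_rule; auto. apply rstep_rule; auto.
    - apply (step_good _ B gt gtr girr gcomp gctx gsub Rn HRn (st i) (st (S i)) (Hsteps i ltac:(lia))); auto.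
      + apply Hord_i; lia.
      + apply IH; lia. }
  destruct Hfair as [HLL Hcp].
  assert (HCPg : forall s t,
    (pcp Rn Rn Rn s t \/ pcp Rn Rn (sym_rules B) s t \/ pcp Rn (sym_rules B) Rn s t) -> Good Rn B gt s t).
  { intros s t Hp. destruct (Hcp s t Hp) as [Hj|[i [Hi Hc]]].
    - apply J_Good; auto.
    - assert (HX : forall a b, rstep (fst (st i)) a b -> Good Rn B gt a b).
      { apply (Good_rstep _ B gt gctx gsub). intros l r Hlr. apply (HG (n - i) i); [lia|auto]. }
      destruct Hc as [Hc|Hc]; [auto|apply Good_sym; auto]. }
  assert (HvR := var_cond _ gt gwf gctx gsub Rn HRn).
  split; [|split].
  - intros s t. split.
    + apply conv_incl. intros a b Hab. apply rstep_union in Hab. destruct Hab as [Hab|Hab].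
      * revert a b Hab. apply conv_rstep. intros l r Hlr.
        apply Good_conv with (gt := gt). apply (HG n 0); auto. left. apply H0E; auto.
      * apply rt_step. left. apply rstep_union. auto.
    + assert (Hfw : forall i, i <= n -> forall a b, fst (st i) a b \/ snd (st i) a b -> conv (runion E B) a b).
      { induction i as [|i IH]; intros Hi a b Hab.
        - destruct Hab as [Hab|Hab].
          + apply rt_step. left. apply rstep_rule. left. apply H0E; auto.
          + apply H0R in Hab. destruct Hab.
        - apply (step_sound _ B gt E (st i) (st (S i)) (Hsteps i ltac:(lia))); auto.
          apply IH; lia. }
      apply conv_incl. intros a b Hab. apply rstep_union in Hab. destruct Hab as [Hab|Hab].
      * revert a b Hab. apply conv_rstep. intros l r Hlr. apply (Hfw n); auto.
      * apply rt_step. left. apply rstep_union. auto.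
  - intros [f Hf]. apply (no_chain _ gt gwf). exists f. intros k.
    destruct (Hf k) as [s' [t' [H1 [H2 H3]]]]. eapply gcomp; eauto.
  - intros s t H.
    apply (abstract_CR _ Rn B gt gtr girr gwf gcomp Rs_gt).
    + apply (HPeak _ Rn B gt gtr gcomp Rs_gt gctx gsub HLL HvR).
      intros; apply HCPg; auto.
    + apply (HCliff _ Rn B gt gtr girr gcomp Rs_gt gctx gsub HLL HvR HvB);
        intros; apply HCPg; auto.
    + auto.
Qed.
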